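(* For any symmetric CQ channel $W$ with input alphabet $\mathbb Z_d$, $V(W)=V(W^\perp)$.
   Context: A CQ channel $W$ assigns to each $z\in\mathbb Z_d$ a density operator $W(z)$ on a finite-dimensional Hilbert space; symmetric means there are unitaries $U_z$ with $U_{z'}W(z)U_{z'}^*=W(z+z')$. Dual channel: with $|\tilde x\rangle=d^{-1/2}\sum_z\omega^{xz}|z\rangle$, $\omega=e^{2\pi i/d}$, choose purifications $|\varphi_z\rangle_{BD}$ of $W(z)$, let $V|z\rangle_A=|z\rangle_C|\varphi_z\rangle_{BD}$, $|\theta_x\rangle=V|\tilde x\rangle_A$, $W^\perp(x)=\mathrm{Tr}_B|\theta_x\rangle\langle\theta_x|$. Dispersion (information variance): $V(\rho,\sigma)=\mathrm{Tr}[\rho(\log\rho-\log\sigma)^2]-D(\rho,\sigma)^2$ with $D(\rho,\sigma)=\mathrm{Tr}[\rho(\log\rho-\log\sigma)]$; $V(Z|B)_\psi=V(\psi_{ZB},\mathbb I_Z\otimes\psi_B)$, and $V(W)=V(Z|B)$ for the state $\frac1d\sum_z|z\rangle\langle z|_Z\otimes W(z)_B$. *)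

(* Defs.v *)
(* real numbers from Stdlib Reals, complex numbers and
   finite-dimensional matrices built by hand (indices are nat; an operator on
   an m-dimensional space only matters on indices < m). *)
From Stdlib Require Import Reals List ClassicalEpsilon.
Open Scope R_scope.

Record C := mkC { re : R; im : R }.
Definition C0 : C := mkC 0 0.
Definition C1 : C := mkC 1 0.
Definition RtoC (r : R) : C := mkC r 0.
Definition Cadd (a b : C) : C := mkC (re a + re b) (im a + im b).
Definition Copp (a : C) : C := mkC (- re a) (- im a).
Definition Cmul (a b : C) : C :=
  mkC (re a * re b - im a * im b) (re a * im b + im a * re b).
Definition Cconj (a : C) : C := mkC (re a) (- im a).
Definition Cexpi (t : R) : C := mkC (cos t) (sin t).

Definition sumC (n : nat) (f : nat -> C) : C :=
  fold_right Cadd C0 (map f (seq 0 n)).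

Definition Vec := nat -> C.
Definition Mat := nat -> nat -> C.

Definition sumV (n : nat) (f : nat -> Vec) : Vec := fun i => sumC n (fun k => f k i).
Definition vscale (c : C) (v : Vec) : Vec := fun i => Cmul c (v i).
Definition basis (z : nat) : Vec := fun i => if Nat.eqb i z then C1 else C0.
Definition inner (n : nat) (u v : Vec) : C := sumC n (fun i => Cmul (Cconj (u i)) (v i)).

Definition madd (A B : Mat) : Mat := fun i j => Cadd (A i j) (B i j).
Definition msub (A B : Mat) : Mat := fun i j => Cadd (A i j) (Copp (B i j)).
Definition mscale (c : C) (A : Mat) : Mat := fun i j => Cmul c (A i j).
Definition mmul (n : nat) (A B : Mat) : Mat :=
  fun i j => sumC n (fun k => Cmul (A i k) (B k j)).
Definition adj (A : Mat) : Mat := fun i j => Cconj (A j i).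
Definition idm : Mat := fun i j => if Nat.eqb i j then C1 else C0.
Definition mtrace (n : nat) (A : Mat) : C := sumC n (fun i => A i i).
Definition mapply (n : nat) (A : Mat) (v : Vec) : Vec :=
  fun i => sumC n (fun j => Cmul (A i j) (v j)).
Definition outer (u v : Vec) : Mat := fun i j => Cmul (u i) (Cconj (v j)).
Definition sumM (n : nat) (f : nat -> Mat) : Mat := fun i j => sumC n (fun k => f k i j).

Definition meq (n : nat) (A B : Mat) : Prop :=
  forall i j, (i < n)%nat -> (j < n)%nat -> A i j = B i j.

(* ---------- tensor products (index of (i,j) in H1 (x) H2, dim H2 = k, is i*k+j) *)
Definition vkron (k : nat) (u v : Vec) : Vec :=
  fun i => Cmul (u (Nat.div i k)) (v (Nat.modulo i k)).
Definition mkron (k : nat) (A B : Mat) : Mat :=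
  fun i j => Cmul (A (Nat.div i k) (Nat.div j k)) (B (Nat.modulo i k) (Nat.modulo j k)).
(* partial trace over the first factor of H1 (x) H2, dim H1 = m, dim H2 = k *)
Definition ptrace1 (m k : nat) (M : Mat) : Mat :=
  fun b b' => sumC m (fun z => M (z * k + b)%nat (z * k + b')%nat).
(* partial trace over the second factor of H1 (x) H2, dim H2 = k *)
Definition ptrace2 (k : nat) (M : Mat) : Mat :=
  fun b b' => sumC k (fun e => M (b * k + e)%nat (b' * k + e)%nat).
(* partial trace over the middle factor of H1 (x) H2 (x) H3, dims (_, k2, k3);
   result on H1 (x) H3 *)
Definition ptrace_mid (k2 k3 : nat) (M : Mat) : Mat :=
  fun i j => sumC k2 (fun b =>
    M (Nat.div i k3 * (k2 * k3) + b * k3 + Nat.modulo i k3)%nat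
      (Nat.div j k3 * (k2 * k3) + b * k3 + Nat.modulo j k3)%nat).

Definition hermitian (n : nat) (A : Mat) : Prop := meq n (adj A) A.
Definition psd (n : nat) (A : Mat) : Prop :=
  forall v : Vec, 0 <= re (inner n v (mapply n A v)).
Definition is_density (n : nat) (rho : Mat) : Prop :=
  hermitian n rho /\ psd n rho /\ mtrace n rho = C1.
Definition unitary (n : nat) (U : Mat) : Prop :=
  meq n (mmul n (adj U) U) idm /\ meq n (mmul n U (adj U)) idm.

Definition spectral (n : nat) (A : Mat) (e : nat -> Vec) (lam : nat -> R) : Prop :=
  (forall i j, (i < n)%nat -> (j < n)%nat ->
     inner n (e i) (e j) = if Nat.eqb i j then C1 else C0) /\
  meq n A (sumM n (fun k => mscale (RtoC (lam k)) (outer (e k) (e k)))).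
Definition mfun (n : nat) (f : R -> R) (e : nat -> Vec) (lam : nat -> R) : Mat :=
  sumM n (fun k => mscale (RtoC (f (lam k))) (outer (e k) (e k))).
(* L is log A (Stdlib: ln x = 0 for x <= 0, i.e. the log is taken on the
   support, the standard convention in Tr[rho log sigma] with supp rho <= supp sigma) *)
Definition is_log (n : nat) (A L : Mat) : Prop :=
  exists e lam, spectral n A e lam /\ L = mfun n ln e lam.
Definition mlog (n : nat) (A : Mat) : Mat :=
  epsilon (inhabits (fun _ _ => C0)) (is_log n A).

Definition relD (n : nat) (rho sigma : Mat) : R :=
  re (mtrace n (mmul n rho (msub (mlog n rho) (mlog n sigma)))).
Definition dispersion (n : nat) (rho sigma : Mat) : R :=
  let X := msub (mlog n rho) (mlog n sigma) in
  re (mtrace n (mmul n rho (mmul n X X))) - (relD n rho sigma) ^ 2.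

(* W z is an operator on an n-dimensional space B, for z in Z_d = {0..d-1} *)
Definition cq_channel (d n : nat) (W : nat -> Mat) : Prop :=
  forall z, (z < d)%nat -> is_density n (W z).
Definition symmetric_channel (d n : nat) (W : nat -> Mat) : Prop :=
  exists U : nat -> Mat,
    (forall z, (z < d)%nat -> unitary n (U z)) /\
    (forall z z', (z < d)%nat -> (z' < d)%nat ->
       meq n (mmul n (mmul n (U z') (W z)) (adj (U z'))) (W ((z + z') mod d)%nat)).

Definition cq_state (d n : nat) (W : nat -> Mat) : Mat :=
  sumM d (fun z => mscale (RtoC (/ INR d)) (mkron n (outer (basis z) (basis z)) (W z))).
(* V(W) = V(Z|B) = V(psi_ZB, I_Z (x) psi_B) *)
Definition V_channel (d n : nat) (W : nat -> Mat) : R :=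
  let psi := cq_state d n W in
  dispersion (d * n) psi (mkron n idm (ptrace1 d n psi)).

(* phi z in B (x) D (dims n, nD) purifies rho *)
Definition purifies (n nD : nat) (phi : Vec) (rho : Mat) : Prop :=
  meq n (ptrace2 nD (outer phi phi)) rho.
Definition fourier (d x : nat) : Vec :=
  sumV d (fun z => vscale (Cmul (RtoC (/ sqrt (INR d)))
                                (Cexpi (2 * PI * INR (x * z) / INR d))) (basis z)).
(* V |z>_A = |z>_C |phi_z>_BD  (C (x) B (x) D, dims d, n, nD) *)
Definition Viso (d n nD : nat) (phi : nat -> Vec) (psi : Vec) : Vec :=
  sumV d (fun z => vscale (psi z) (vkron (n * nD) (basis z) (phi z))).
Definition theta (d n nD : nat) (phi : nat -> Vec) (x : nat) : Vec :=
  Viso d n nD phi (fourier d x).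
(* W^perp(x) = Tr_B |theta_x><theta_x|, an operator on C (x) D, dim d*nD *)
Definition dual_channel (d n nD : nat) (phi : nat -> Vec) : nat -> Mat :=
  fun x => ptrace_mid n nD (outer (theta d n nD phi x) (theta d n nD phi x)).

(* Main.v *)
From Pilot Require Import Defs.
From Stdlib Require Import Reals Lra Lia List Psatz ClassicalEpsilon.
Import Pilot.Defs.
From mathcomp Require all_boot all_order all_algebra Rstruct.
From mathcomp.real_closed Require complex.
Open Scope R_scope.

Open Scope R_scope.

Lemma C_ext (a b : C) : re a = re b -> im a = im b -> a = b.
Proof. destruct a, b; simpl; intros; subst; reflexivity. Qed.

Definition Csub (a b : C) := Cadd a (Copp b).

Lemma Cring : ring_theory C0 C1 Cadd Cmul Csub Copp (@eq C).
Proof.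
  constructor; intros; apply C_ext; unfold Csub, Cadd, Cmul, Copp, C0, C1; simpl; ring.
Qed.
Add Ring Cr : Cring.

Ltac Ceq := apply C_ext; unfold Csub, Cadd, Cmul, Copp, C0, C1, Cconj, RtoC; simpl; ring.

Lemma fold_shift (l : list C) a : fold_right Cadd a l = Cadd (fold_right Cadd C0 l) a.
Proof. induction l; simpl. ring. rewrite IHl. ring. Qed.

Lemma sumC_0 f : sumC 0 f = C0. Proof. reflexivity. Qed.
Lemma sumC_S n f : sumC (S n) f = Cadd (sumC n f) (f n).
Proof.
  unfold sumC. rewrite seq_S, map_app, fold_right_app. simpl.
  rewrite (fold_shift _ (Cadd (f n) C0)). f_equal. ring.
Qed.

Lemma sumC_ext n f g : (forall i, (i < n)%nat -> f i = g i) -> sumC n f = sumC n g.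
Proof.
  induction n; intros H. reflexivity.
  rewrite !sumC_S, IHn, H; auto; intros; apply H; lia.
Qed.

Lemma sumC_add n f g : sumC n (fun i => Cadd (f i) (g i)) = Cadd (sumC n f) (sumC n g).
Proof. induction n. rewrite !sumC_0; ring. rewrite !sumC_S, IHn. ring. Qed.

Lemma sumC_scal_l n c f : sumC n (fun i => Cmul c (f i)) = Cmul c (sumC n f).
Proof. induction n. rewrite !sumC_0; ring. rewrite !sumC_S, IHn. ring. Qed.

Lemma sumC_scal_r n c f : sumC n (fun i => Cmul (f i) c) = Cmul (sumC n f) c.
Proof. induction n. rewrite !sumC_0; ring. rewrite !sumC_S, IHn. ring. Qed.

Lemma sumC_opp n f : sumC n (fun i => Copp (f i)) = Copp (sumC n f).
Proof. induction n. rewrite !sumC_0; Ceq. rewrite !sumC_S, IHn. ring. Qed.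

Lemma sumC_sub n f g : sumC n (fun i => Csub (f i) (g i)) = Csub (sumC n f) (sumC n g).
Proof. unfold Csub. rewrite sumC_add, sumC_opp. reflexivity. Qed.

Lemma sumC_zero n f : (forall i, (i < n)%nat -> f i = C0) -> sumC n f = C0.
Proof. intros H. rewrite (sumC_ext n f (fun _ => C0)); auto. induction n; auto. rewrite sumC_S, IHn; auto. ring. Qed.

Lemma sumC_swap n m (f : nat -> nat -> C) :
  sumC n (fun i => sumC m (fun j => f i j)) = sumC m (fun j => sumC n (fun i => f i j)).
Proof.
  induction n. simpl. symmetry. apply sumC_zero. auto.
  rewrite sumC_S, IHn. rewrite <- sumC_add. apply sumC_ext. intros. rewrite sumC_S. reflexivity.
Qed.

Lemma sumC_plus p q f : sumC (p + q) f = Cadd (sumC p f) (sumC q (fun i => f (p + i)%nat)).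
Proof.
  induction q. rewrite Nat.add_0_r. rewrite sumC_0. ring.
  rewrite Nat.add_succ_r, !sumC_S, IHq. ring.
Qed.

Lemma sumC_prod m k f :
  sumC (m * k) f = sumC m (fun a => sumC k (fun b => f (a * k + b)%nat)).
Proof.
  induction m. reflexivity.
  rewrite Nat.mul_succ_l, sumC_plus, IHm, sumC_S. reflexivity.
Qed.

Lemma sumC_delta n j f :
  sumC n (fun i => if Nat.eqb i j then f i else C0) = if Nat.ltb j n then f j else C0.
Proof.
  induction n. simpl. reflexivity.
  rewrite sumC_S, IHn.
  destruct (Nat.eqb_spec n j); destruct (Nat.ltb_spec j n); destruct (Nat.ltb_spec j (S n)); subst;
   try lia; ring.
Qed.

Lemma sumC_delta' n j f :
  sumC n (fun i => if Nat.eqb j i then f i else C0) = if Nat.ltb j n then f j else C0.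
Proof.
  rewrite <- sumC_delta. apply sumC_ext. intros. rewrite Nat.eqb_sym. reflexivity.
Qed.

Lemma Cconj_sum n f : Cconj (sumC n f) = sumC n (fun i => Cconj (f i)).
Proof. induction n. Ceq. rewrite !sumC_S, <- IHn. Ceq. Qed.

Lemma re_sum n f : re (sumC n f) = fold_right Rplus 0 (map (fun i => re (f i)) (seq 0 n)).
Proof.
  unfold sumC. generalize (seq 0 n). induction l; simpl; auto. rewrite IHl. reflexivity.
Qed.

Lemma re_add a b : re (Cadd a b) = re a + re b. Proof. reflexivity. Qed.
Lemma re_mulR r a : re (Cmul (RtoC r) a) = r * re a. Proof. simpl. ring. Qed.

Lemma divmod_eq a b m : (b < m)%nat -> ((a * m + b) / m = a /\ (a * m + b) mod m = b)%nat.
Proof.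
  intros H. split.
  - symmetry. apply (Nat.div_unique _ _ _ b); lia.
  - symmetry. apply (Nat.mod_unique _ _ a); lia.
Qed.

Lemma divmod_lt i m d : (i < d * m)%nat -> (i / m < d /\ i mod m < m)%nat.
Proof.
  intros H. assert (m <> 0)%nat by (intro; subst; lia).
  split. apply Nat.Div0.div_lt_upper_bound. lia. apply Nat.mod_upper_bound; auto.
Qed.

Lemma divmod_recomp i m : (m <> 0)%nat -> ((i / m) * m + i mod m = i)%nat.
Proof. intros. rewrite Nat.mul_comm. symmetry. apply Nat.div_mod. auto. Qed.

Open Scope R_scope.

Module Tr.
Import all_boot all_order all_algebra Rstruct complex.
Import GRing.Theory Num.Theory.
From mathcomp Require Import ring.
Local Open Scope ring_scope.
Local Open Scope complex_scope.

Definition toc (c : Defs.C) : R[i] := Complex (re c) (im c).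
Definition fromc (z : R[i]) : Defs.C := mkC (complex.Re z) (complex.Im z).

Lemma toc_inj a b : toc a = toc b -> a = b.
Proof. case: a => a1 a2; case: b => b1 b2; rewrite /toc => [[-> ->]]. by []. Qed.
Lemma tocK z : toc (fromc z) = z. Proof. by case: z. Qed.

Lemma toc_add a b : toc (Cadd a b) = toc a + toc b.
Proof. by case: a => a1 a2; case: b => b1 b2. Qed.
Lemma toc_mul a b : toc (Cmul a b) = toc a * toc b.
Proof. by case: a => a1 a2; case: b => b1 b2. Qed.
Lemma toc_0 : toc C0 = 0. Proof. by []. Qed.
Lemma toc_1 : toc C1 = 1. Proof. by []. Qed.
Lemma conjE (a b : R) : Num.conj (Complex a b) = Complex a (- b).
Proof.
have -> : Complex a b = a%:C + 'i%R * b%:C.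
  rewrite -complexiE; apply/eqP; rewrite eq_complex /=; apply/andP; split; apply/eqP; ring.
rewrite conjC_rect; last 2 first.
  by apply/complex_realP; exists a.
  by apply/complex_realP; exists b.
rewrite -complexiE; apply/eqP; rewrite eq_complex /=; apply/andP; split; apply/eqP; ring.
Qed.
Lemma toc_conj a : toc (Cconj a) = Num.conj (toc a).
Proof. by case: a => a1 a2; rewrite /toc conjE. Qed.

Lemma toc_sum n f : toc (sumC n f) = \sum_(i < n) toc (f i).
Proof.
elim: n => [|n IH]; first by rewrite big_ord0.
by rewrite sumC_S toc_add IH big_ord_recr.
Qed.

Definition ctrans {m n} (M : 'M[R[i]]_(m, n)) : 'M[R[i]]_(n, m) := map_mx (@Num.conj _) (M^T).

Lemma CL p (e : nat -> Vec) :
  (forall i j, lt i p -> lt j p -> inner p (e i) (e j) = if Nat.eqb i j then C1 else C0) ->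
  forall i j, lt i p -> lt j p ->
  sumC p (fun k => Cmul (e k i) (Cconj (e k j))) = if Nat.eqb i j then C1 else C0.
Proof.
move=> Hon i j /ltP Hi /ltP Hj.
pose E : 'M[R[i]]_p := \matrix_(k, l) toc (e k l).
have EE : E *m ctrans E = 1%:M.
  apply/matrixP => k k'; rewrite !mxE.
  have := Hon k' k (ltP (ltn_ord k')) (ltP (ltn_ord k)).
  move=> /(congr1 toc); rewrite toc_sum => H.
  have -> : (k == k')%:R = toc (if Nat.eqb k' k then C1 else C0).
    by case: (Nat.eqb_spec k' k) => [/val_inj ->|Hne]; rewrite ?eqxx //;
       case: eqP => // Hkk; case: Hne; rewrite Hkk.
  rewrite -H; apply: eq_bigr => l _; rewrite !mxE toc_mul toc_conj mulrC //.
have EE' := mulmx1C EE.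
apply: toc_inj; rewrite toc_sum.
have := congr1 (fun M : 'M[R[i]]_p => M (Ordinal Hj) (Ordinal Hi)) EE'.
rewrite !mxE /= => H.
have -> : toc (if Nat.eqb i j then C1 else C0) = ((Ordinal Hj == Ordinal Hi)%:R).
  case: (Nat.eqb_spec i j) => [Hij|Hne].
    have -> : Ordinal Hj = Ordinal Hi by apply: val_inj; rewrite /= Hij.
    by rewrite eqxx.
  by case: eqP => // [[Hji]]; case: Hne.
rewrite -H; apply: eq_bigr => k _; rewrite !mxE toc_mul toc_conj mulrC //.
Qed.

Lemma SE p (A : Mat) : Defs.hermitian p A -> exists e lam, Defs.spectral p A e lam.
Proof.
rewrite /Defs.hermitian /meq /adj => HA.
case: p HA => [|p'] HA.
  exists (fun _ _ => C0), (fun _ => 0%R); split => i j Hi; exfalso; lia.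
set p := p'.+1 in HA *.
pose AM : 'M[R[i]]_p := \matrix_(i, j) toc (A i j).
have Herm : ctrans AM = AM.
  apply/matrixP => i j; rewrite !mxE -toc_conj HA //; apply/ltP => //.
have Hn : AM \is normalmx by apply/normalmxP; rewrite /ctrans in Herm; rewrite Herm.
have Hh : AM \is hermsymmx.
  by apply/is_hermitianmxP; rewrite expr0 scale1r; rewrite /ctrans in Herm; rewrite Herm.
have Hreal := hermitian_spectral_diag_real Hh.
have Hsp := orthomx_spectralP Hn.
set P := spectralmx AM in Hsp; set D := spectral_diag AM in Hsp Hreal.
have PU : P \is unitarymx := spectral_unitarymx AM.
rewrite invmx_unitary // in Hsp.
have PP : P *m ctrans P = 1%:M by apply/unitarymxP.
have Dr : forall k, D 0 k = Complex (complex.Re (D 0 k)) 0.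
  move=> k; move/mxOverP: Hreal => /(_ 0 k); case: (D 0 k) => a b.
  by rewrite complex_real => /eqP ->.
exists (fun k i => fromc (Num.conj (P (inord k) (inord i)))).
exists (fun k => complex.Re (D 0 (inord k))).
split.
- move=> k l /ltP Hk /ltP Hl; apply: toc_inj; rewrite toc_sum.
  have := congr1 (fun M : 'M[R[i]]_p => M (inord k) (inord l)) PP.
  rewrite !mxE => H.
  have -> : toc (if Nat.eqb k l then C1 else C0) = ((inord k : 'I_p) == inord l)%:R.
    case: (Nat.eqb_spec k l) => [->|Hne]; first by rewrite eqxx.
    case: eqP => // /(congr1 val); rewrite /= !inordK // => Hkl; by case: Hne.
  rewrite -H; apply: eq_bigr => i _.
  by rewrite toc_mul toc_conj !tocK !mxE conjCK inord_val mulrC.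
- move=> i j /ltP Hi /ltP Hj; apply: toc_inj.
  rewrite /sumM toc_sum.
  have := congr1 (fun M : 'M[R[i]]_p => M (inord i) (inord j)) Hsp.
  rewrite !mxE inordK // inordK // => ->.
  apply: eq_bigr => k _.
  rewrite mul_mx_diag !mxE /mscale /outer toc_mul toc_mul toc_conj !tocK conjCK inord_val.
  rewrite [D 0 k]Dr /toc /=.
  have -> : Complex (complex.Re (D 0 k)) 0 = (complex.Re (D 0 k))%:C by [].
  ring.
Qed.
End Tr.

Open Scope R_scope.

Definition ortho (p : nat) (e : nat -> Vec) : Prop :=
  forall i j, (i < p)%nat -> (j < p)%nat -> inner p (e i) (e j) = if Nat.eqb i j then C1 else C0.

Lemma compl p e : ortho p e -> forall i j, (i < p)%nat -> (j < p)%nat ->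
  sumC p (fun k => Cmul (e k i) (Cconj (e k j))) = if Nat.eqb i j then C1 else C0.
Proof. intros H. apply Tr.CL. exact H. Qed.

Lemma expand p e (t : nat -> C) : ortho p e -> forall b, (b < p)%nat ->
  t b = sumC p (fun m => Cmul (e m b) (sumC p (fun b' => Cmul (Cconj (e m b')) (t b')))).
Proof.
  intros He b Hb.
  rewrite (sumC_ext _ _ (fun m => sumC p (fun b' => Cmul (Cmul (e m b) (Cconj (e m b'))) (t b')))).
  2:{ intros. rewrite <- sumC_scal_l. apply sumC_ext. intros. ring. }
  rewrite sumC_swap.
  rewrite (sumC_ext _ _ (fun b' => if Nat.eqb b b' then t b' else C0)).
  - rewrite sumC_delta'. destruct (Nat.ltb_spec b p); [reflexivity|lia].
  - intros b' Hb'. rewrite sumC_scal_r, compl; auto. destruct (Nat.eqb b b'); ring.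
Qed.

Definition cc p q (e f : nat -> Vec) (Th : nat -> nat -> C) k m :=
  sumC p (fun i => sumC q (fun b => Cmul (Cmul (Cconj (e k i)) (Cconj (f m b))) (Th i b))).

Lemma dk_expand p q e f Th k b : ortho q f -> (b < q)%nat ->
  sumC p (fun i' => Cmul (Cconj (e k i')) (Th i' b)) =
  sumC q (fun m => Cmul (f m b) (cc p q e f Th k m)).
Proof.
  intros Hf Hb.
  rewrite (sumC_ext p _ (fun i' => Cmul (Cconj (e k i'))
     (sumC q (fun m => Cmul (f m b) (sumC q (fun b' => Cmul (Cconj (f m b')) (Th i' b'))))))).
  2:{ intros. f_equal. apply (expand q f (fun b => Th i b)); auto. }
  unfold cc.
  rewrite (sumC_ext p _ (fun i' => sumC q (fun m => Cmul (f m b) (sumC q (fun b' =>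
             Cmul (Cmul (Cconj (e k i')) (Cconj (f m b'))) (Th i' b')))))).
  2:{ intros. rewrite <- sumC_scal_l. apply sumC_ext. intros. rewrite <- !sumC_scal_l.
      apply sumC_ext. intros. ring. }
  rewrite sumC_swap. apply sumC_ext. intros. rewrite <- sumC_scal_l. reflexivity.
Qed.

Lemma dm_expand p q e f Th m i : ortho p e -> (i < p)%nat ->
  sumC q (fun b' => Cmul (Cconj (f m b')) (Th i b')) =
  sumC p (fun k => Cmul (e k i) (cc p q e f Th k m)).
Proof.
  intros He Hi.
  rewrite (sumC_ext q _ (fun b' => Cmul (Cconj (f m b'))
     (sumC p (fun k => Cmul (e k i) (sumC p (fun i' => Cmul (Cconj (e k i')) (Th i' b'))))))).
  2:{ intros. f_equal. apply (expand p e (fun i1 => Th i1 i0) He i Hi). }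
  unfold cc.
  rewrite (sumC_ext q _ (fun b' => sumC p (fun k => Cmul (e k i) (sumC p (fun i' =>
             Cmul (Cmul (Cconj (e k i')) (Cconj (f m b'))) (Th i' b')))))).
  2:{ intros. rewrite <- sumC_scal_l. apply sumC_ext. intros. rewrite <- !sumC_scal_l.
      apply sumC_ext. intros. ring. }
  rewrite sumC_swap. apply sumC_ext. intros. rewrite sumC_scal_l. f_equal. apply sumC_swap.
Qed.

Lemma CORE p q (e f : nat -> Vec) (al be : nat -> R) (Th : nat -> nat -> C) :
  ortho p e -> ortho q f ->
  (forall k m, (k < p)%nat -> (m < q)%nat ->
     Cmul (RtoC (al k)) (cc p q e f Th k m) = Cmul (RtoC (be m)) (cc p q e f Th k m)) ->
  forall i b, (i < p)%nat -> (b < q)%nat ->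
  sumC p (fun i' => Cmul (sumC p (fun k => Cmul (RtoC (al k)) (Cmul (e k i) (Cconj (e k i'))))) (Th i' b)) =
  sumC q (fun b' => Cmul (sumC q (fun m => Cmul (RtoC (be m)) (Cmul (f m b) (Cconj (f m b'))))) (Th i b')).
Proof.
  intros He Hf Hab i b Hi Hb.
  transitivity (sumC p (fun k => Cmul (Cmul (RtoC (al k)) (e k i))
                       (sumC p (fun i' => Cmul (Cconj (e k i')) (Th i' b))))).
  { rewrite (sumC_ext p _ (fun i' => sumC p (fun k => Cmul (Cmul (RtoC (al k)) (e k i))
                                                 (Cmul (Cconj (e k i')) (Th i' b))))).
    2:{ intros. rewrite <- sumC_scal_r. apply sumC_ext. intros. ring. }
    rewrite sumC_swap. apply sumC_ext. intros. rewrite sumC_scal_l. reflexivity. }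
  transitivity (sumC q (fun m => Cmul (Cmul (RtoC (be m)) (f m b))
                       (sumC q (fun b' => Cmul (Cconj (f m b')) (Th i b'))))).
  2:{ symmetry. rewrite (sumC_ext q (fun b' => Cmul _ _) (fun b' => sumC q (fun m => Cmul (Cmul (RtoC (be m)) (f m b))
                                                 (Cmul (Cconj (f m b')) (Th i b'))))).
    2:{ intros. rewrite <- sumC_scal_r. apply sumC_ext. intros. ring. }
    rewrite sumC_swap. apply sumC_ext. intros. rewrite sumC_scal_l. reflexivity. }
  rewrite (sumC_ext p _ (fun k => sumC q (fun m => Cmul (Cmul (e k i) (f m b)) (Cmul (RtoC (al k)) (cc p q e f Th k m))))).
  2:{ intros k Hk. rewrite (dk_expand p q e f Th k b); auto. rewrite <- sumC_scal_l. apply sumC_ext. intros. ring. }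
  rewrite (sumC_ext q _ (fun m => sumC p (fun k => Cmul (Cmul (e k i) (f m b)) (Cmul (RtoC (be m)) (cc p q e f Th k m))))).
  2:{ intros m Hm. rewrite (dm_expand p q e f Th m i); auto. rewrite <- sumC_scal_l. apply sumC_ext. intros. ring. }
  rewrite sumC_swap. apply sumC_ext. intros m Hm. apply sumC_ext. intros k Hk. rewrite Hab; auto.
Qed.

Lemma mfun_entry n g e lam i j :
  mfun n g e lam i j = sumC n (fun k => Cmul (RtoC (g (lam k))) (Cmul (e k i) (Cconj (e k j)))).
Proof. reflexivity. Qed.

Lemma spec_ortho p A e lam : spectral p A e lam -> ortho p e.
Proof. intros [H _]. exact H. Qed.

Lemma LE p A e lam : spectral p A e lam -> forall k j, (k < p)%nat -> (j < p)%nat ->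
  sumC p (fun i => Cmul (Cconj (e k i)) (A i j)) = Cmul (RtoC (lam k)) (Cconj (e k j)).
Proof.
  intros [Ho Hm] k j Hk Hj.
  rewrite (sumC_ext _ _ (fun i => sumC p (fun l => Cmul (Cmul (RtoC (lam l)) (Cconj (e l j))) (Cmul (Cconj (e k i)) (e l i))))).
  2:{ intros i Hi. rewrite (Hm i j Hi Hj). unfold sumM, mscale, outer. rewrite <- sumC_scal_l.
      apply sumC_ext; intros; ring. }
  rewrite sumC_swap.
  rewrite (sumC_ext _ _ (fun l => if Nat.eqb k l then Cmul (RtoC (lam l)) (Cconj (e l j)) else C0)).
  - rewrite sumC_delta'. destruct (Nat.ltb_spec k p); [reflexivity|lia].
  - intros l Hl. rewrite sumC_scal_l.
    change (sumC p (fun i => Cmul (Cconj (e k i)) (e l i))) with (inner p (e k) (e l)).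
    rewrite Ho; auto. destruct (Nat.eqb k l); ring.
Qed.

Lemma RE p A e lam : spectral p A e lam -> forall k i, (k < p)%nat -> (i < p)%nat ->
  sumC p (fun j => Cmul (A i j) (e k j)) = Cmul (RtoC (lam k)) (e k i).
Proof.
  intros [Ho Hm] k i Hk Hi.
  rewrite (sumC_ext _ _ (fun j => sumC p (fun l => Cmul (Cmul (RtoC (lam l)) (e l i)) (Cmul (Cconj (e l j)) (e k j))))).
  2:{ intros j Hj. rewrite (Hm i j Hi Hj). unfold sumM, mscale, outer. rewrite <- sumC_scal_r.
      apply sumC_ext; intros; ring. }
  rewrite sumC_swap.
  rewrite (sumC_ext _ _ (fun l => if Nat.eqb k l then Cmul (RtoC (lam l)) (e l i) else C0)).
  - rewrite sumC_delta'. destruct (Nat.ltb_spec k p); [reflexivity|lia].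
  - intros l Hl. rewrite sumC_scal_l.
    change (sumC p (fun j => Cmul (Cconj (e l j)) (e k j))) with (inner p (e l) (e k)).
    rewrite Ho; auto. rewrite Nat.eqb_sym. destruct (Nat.eqb k l); ring.
Qed.

Lemma Cscal_eq a b c : Cmul (RtoC a) c = Cmul (RtoC b) c -> a = b \/ c = C0.
Proof.
  intros H. destruct (Req_dec a b) as [|Hab]; [left; auto|right].
  destruct c as [x y]. unfold Cmul, RtoC in H; simpl in H. injection H as H1 H2.
  assert ((a - b) * x = 0) by lra. assert ((a - b) * y = 0) by lra.
  apply Rmult_integral in H. apply Rmult_integral in H0.
  unfold C0. f_equal; [destruct H|destruct H0]; auto; lra.
Qed.

Lemma gfun_eq (g : R -> R) a b c : Cmul (RtoC a) c = Cmul (RtoC b) c ->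
  Cmul (RtoC (g a)) c = Cmul (RtoC (g b)) c.
Proof. intros H. destruct (Cscal_eq _ _ _ H) as [ -> | -> ]; ring. Qed.

Lemma Cconj_conj a : Cconj (Cconj a) = a. Proof. destruct a; Ceq. Qed.
Lemma Cconj_mul a b : Cconj (Cmul a b) = Cmul (Cconj a) (Cconj b). Proof. destruct a, b; Ceq. Qed.
Lemma Cconj_add a b : Cconj (Cadd a b) = Cadd (Cconj a) (Cconj b). Proof. destruct a, b; Ceq. Qed.
Lemma Cconj_R r : Cconj (RtoC r) = RtoC r. Proof. Ceq. Qed.
Lemma Cconj_0 : Cconj C0 = C0. Proof. Ceq. Qed.
Lemma Cconj_1 : Cconj C1 = C1. Proof. Ceq. Qed.

Lemma ortho_conj p f : ortho p f -> ortho p (fun m b => Cconj (f m b)).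
Proof.
  intros H i j Hi Hj. unfold inner.
  rewrite (sumC_ext _ _ (fun k => Cconj (Cmul (Cconj (f i k)) (f j k)))).
  - rewrite <- Cconj_sum. change (sumC p (fun k => Cmul (Cconj (f i k)) (f j k))) with (inner p (f i) (f j)).
    rewrite H; auto. destruct (Nat.eqb i j); Ceq.
  - intros. rewrite Cconj_mul, !Cconj_conj. reflexivity.
Qed.

Lemma UQ p A e lam f mu g : spectral p A e lam -> spectral p A f mu ->
  meq p (mfun p g e lam) (mfun p g f mu).
Proof.
  intros He Hf i b Hi Hb.
  pose (Th := fun i b : nat => if Nat.eqb i b then C1 else C0).
  assert (HC := CORE p p e (fun m b => Cconj (f m b)) (fun k => g (lam k)) (fun m => g (mu m)) Th
    (spec_ortho _ _ _ _ He) (ortho_conj _ _ (spec_ortho _ _ _ _ Hf))).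
  assert (Hcc : forall k m, (k < p)%nat -> (m < p)%nat ->
     cc p p e (fun m b => Cconj (f m b)) Th k m = sumC p (fun i => Cmul (Cconj (e k i)) (f m i))).
  { intros k m Hk Hm. unfold cc, Th. apply sumC_ext. intros i' Hi'.
    rewrite (sumC_ext _ _ (fun b => if Nat.eqb i' b then Cmul (Cconj (e k i')) (f m i') else C0)).
    - rewrite sumC_delta'. destruct (Nat.ltb_spec i' p); [reflexivity|lia].
    - intros b' Hb'. destruct (Nat.eqb_spec i' b'); [subst; rewrite Cconj_conj; ring|ring]. }
  specialize (HC ltac:(intros k m Hk Hm; apply gfun_eq; rewrite Hcc; auto;
    rewrite <- sumC_scal_l, <- sumC_scal_l;
    transitivity (sumC p (fun i => Cmul (sumC p (fun j => Cmul (Cconj (e k j)) (A j i))) (f m i)));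
    [ apply sumC_ext; intros; rewrite (LE p A e lam He); auto; ring | ];
    transitivity (sumC p (fun j => Cmul (Cconj (e k j)) (sumC p (fun i => Cmul (A j i) (f m i)))));
    [ rewrite (sumC_ext p _ (fun i => sumC p (fun j => Cmul (Cconj (e k j)) (Cmul (A j i) (f m i)))));
      [ rewrite sumC_swap; apply sumC_ext; intros; rewrite sumC_scal_l; reflexivity
      | intros; rewrite <- sumC_scal_r; apply sumC_ext; intros; ring ] | ];
    apply sumC_ext; intros; rewrite (RE p A f mu Hf); auto; ring) i b Hi Hb).
  unfold Th in HC.
  rewrite (sumC_ext _ (fun i' => Cmul _ (if Nat.eqb i' b then C1 else C0))
              (fun i' => if Nat.eqb i' b then mfun p g e lam i i' else C0)) in HC.
  2:{ intros. destruct (Nat.eqb i0 b); [rewrite mfun_entry; ring|ring]. }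
  rewrite sumC_delta in HC.
  rewrite (sumC_ext _ (fun b' => Cmul _ (if Nat.eqb i b' then C1 else C0))
              (fun b' => if Nat.eqb i b' then sumC p (fun m => Cmul (RtoC (g (mu m))) (Cmul (Cconj (f m b)) (Cconj (Cconj (f m b'))))) else C0)) in HC.
  2:{ intros b' Hb'. destruct (Nat.eqb i b'); ring. }
  rewrite sumC_delta' in HC.
  destruct (Nat.ltb_spec b p); [|lia]. destruct (Nat.ltb_spec i p); [|lia].
  rewrite HC, mfun_entry. apply sumC_ext. intros. rewrite Cconj_conj. ring.
Qed.

Lemma ML p A e lam : spectral p A e lam -> meq p (mlog p A) (mfun p ln e lam).
Proof.
  intros Hs. unfold mlog.
  assert (Hex : exists L, is_log p A L) by (exists (mfun p ln e lam); exists e, lam; auto).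
  destruct (epsilon_spec (inhabits (fun _ _ => C0)) (is_log p A) Hex) as [e' [lam' [Hs' ->]]].
  apply (UQ p A); auto.
Qed.

Lemma sum3_rev a b c (F : nat -> nat -> nat -> C) :
  sumC a (fun i => sumC b (fun j => sumC c (fun l => F i j l))) =
  sumC c (fun l => sumC b (fun j => sumC a (fun i => F i j l))).
Proof.
  rewrite (sumC_ext a _ (fun i => sumC c (fun l => sumC b (fun j => F i j l)))).
  - rewrite sumC_swap. apply sumC_ext. intros. apply sumC_swap.
  - intros. apply sumC_swap.
Qed.

Lemma im_sq_sum n (y : nat -> C) : im (sumC n (fun i => Cmul (y i) (Cconj (y i)))) = 0.
Proof. induction n. reflexivity. rewrite sumC_S. simpl. rewrite IHn. ring. Qed.

Lemma re_sq_sum n (y : nat -> C) : 0 <= re (sumC n (fun i => Cmul (y i) (Cconj (y i)))).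
Proof.
  induction n. simpl; lra. rewrite sumC_S. simpl. simpl in IHn.
  nra.
Qed.

Lemma sq_zero n (y : nat -> C) : sumC n (fun i => Cmul (y i) (Cconj (y i))) = C0 ->
  forall i, (i < n)%nat -> y i = C0.
Proof.
  induction n; intros H i Hi. lia.
  rewrite sumC_S in H.
  assert (H1 := re_sq_sum n y). assert (H2 := im_sq_sum n y).
  assert (Hr := f_equal re H). simpl in Hr.
  destruct (y n) as [a b] eqn:Eyn. simpl in Hr.
  assert (Ha : a = 0) by nra. assert (Hb : b = 0) by nra.
  assert (HS : sumC n (fun i => Cmul (y i) (Cconj (y i))) = C0).
  { apply C_ext; simpl; [nra | exact H2]. }
  destruct (Nat.eq_dec i n) as [->|Hne].
  - rewrite Eyn, Ha, Hb. reflexivity.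
  - apply IHn; auto. lia.
Qed.

Lemma TT P Q (Th : nat -> nat -> C) (A B : Mat) e lam f mu (g1 g2 : R -> R) :
  (forall i i', (i < P)%nat -> (i' < P)%nat -> A i i' = sumC Q (fun b => Cmul (Th i b) (Cconj (Th i' b)))) ->
  (forall b b', (b < Q)%nat -> (b' < Q)%nat -> B b b' = sumC P (fun i => Cmul (Th i b) (Cconj (Th i b')))) ->
  spectral P A e lam -> spectral Q B f mu ->
  (forall t, 0 < t -> g1 t = g2 t) ->
  forall i b, (i < P)%nat -> (b < Q)%nat ->
  sumC P (fun i' => Cmul (mfun P g2 e lam i i') (Th i' b)) =
  sumC Q (fun b' => Cmul (mfun Q g1 f mu b b') (Th i b')).
Proof.
  intros HA HB He Hf Hg.
  unfold mfun, sumM, mscale, outer.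
  apply (CORE P Q e f (fun k => g2 (lam k)) (fun m => g1 (mu m)) Th (spec_ortho _ _ _ _ He) (spec_ortho _ _ _ _ Hf)).
  intros k m Hk Hm.
  assert (KI : forall j b, (j < P)%nat -> (b < Q)%nat ->
     sumC P (fun i => Cmul (A j i) (Th i b)) = sumC Q (fun b'' => Cmul (B b b'') (Th j b''))).
  { intros j b Hj Hb.
    rewrite (sumC_ext P _ (fun i => sumC Q (fun c => Cmul (Cmul (Th j c) (Cconj (Th i c))) (Th i b)))).
    2:{ intros. rewrite HA; auto. rewrite sumC_scal_r. reflexivity. }
    rewrite sumC_swap. apply sumC_ext. intros c Hc. rewrite HB; auto. rewrite <- sumC_scal_r.
    apply sumC_ext. intros. ring. }
  assert (S1 : Cmul (RtoC (lam k)) (cc P Q e f Th k m) =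
     sumC P (fun j => sumC Q (fun b => Cmul (Cmul (Cconj (e k j)) (Cconj (f m b))) (sumC P (fun i => Cmul (A j i) (Th i b)))))).
  { unfold cc. rewrite <- sumC_scal_l.
    transitivity (sumC P (fun i => sumC Q (fun b => sumC P (fun j =>
        Cmul (Cmul (Cconj (e k j)) (Cconj (f m b))) (Cmul (A j i) (Th i b)))))).
    - apply sumC_ext; intros i Hi. rewrite <- sumC_scal_l. apply sumC_ext; intros b Hb.
      transitivity (Cmul (Cmul (Cmul (RtoC (lam k)) (Cconj (e k i))) (Cconj (f m b))) (Th i b)); [ring|].
      rewrite <- (LE P A e lam He k i Hk Hi).
      rewrite <- !sumC_scal_r.
      apply sumC_ext; intros. ring.
    - rewrite sum3_rev. apply sumC_ext; intros j Hj. apply sumC_ext; intros b Hb.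
      rewrite <- sumC_scal_l. reflexivity. }
  assert (S2 : Cmul (RtoC (mu m)) (cc P Q e f Th k m) =
     sumC P (fun j => sumC Q (fun b => Cmul (Cmul (Cconj (e k j)) (Cconj (f m b))) (sumC Q (fun b'' => Cmul (B b b'') (Th j b'')))))).
  { unfold cc. rewrite <- sumC_scal_l.
    apply sumC_ext; intros j Hj.
    transitivity (sumC Q (fun b'' => sumC Q (fun b =>
        Cmul (Cmul (Cconj (e k j)) (Cconj (f m b))) (Cmul (B b b'') (Th j b''))))).
    - rewrite <- sumC_scal_l. apply sumC_ext; intros b'' Hb''.
      assert (HL := LE Q B f mu Hf m b'' Hm Hb'').
      rewrite (sumC_ext Q _ (fun b => Cmul (Cmul (Cconj (e k j)) (Th j b'')) (Cmul (Cconj (f m b)) (B b b'')))).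
      2:{ intros. ring. }
      rewrite sumC_scal_l, HL. ring.
    - rewrite sumC_swap. apply sumC_ext; intros b Hb. rewrite <- sumC_scal_l. reflexivity. }
  assert (Step1 : Cmul (RtoC (lam k)) (cc P Q e f Th k m) = Cmul (RtoC (mu m)) (cc P Q e f Th k m)).
  { rewrite S1, S2. apply sumC_ext; intros j Hj. apply sumC_ext; intros b Hb. rewrite KI; auto. }
  assert (Step2 : 0 <= mu m /\ (mu m = 0 -> cc P Q e f Th k m = C0)).
  { set (y := fun i => sumC Q (fun b => Cmul (Cconj (f m b)) (Th i b))).
    assert (Hy : sumC P (fun i => Cmul (y i) (Cconj (y i))) = RtoC (mu m)).
    { transitivity (sumC Q (fun b' => Cmul (sumC Q (fun b => Cmul (Cconj (f m b)) (B b b'))) (f m b'))).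
      - unfold y.
        rewrite (sumC_ext P _ (fun i => sumC Q (fun b' => sumC Q (fun b =>
              Cmul (Cmul (Cconj (f m b)) (f m b')) (Cmul (Th i b) (Cconj (Th i b'))))))).
        2:{ intros. rewrite Cconj_sum. rewrite <- sumC_scal_r. rewrite sumC_swap.
            apply sumC_ext; intros. rewrite <- sumC_scal_l. apply sumC_ext; intros.
            rewrite Cconj_mul, Cconj_conj. ring. }
        rewrite sum3_rev, sumC_swap. apply sumC_ext; intros b' Hb'. rewrite <- sumC_scal_r.
        apply sumC_ext; intros b Hb. rewrite HB; auto. rewrite <- !sumC_scal_l, <- sumC_scal_r.
        apply sumC_ext; intros. ring.
      - rewrite (sumC_ext Q _ (fun b' => Cmul (RtoC (mu m)) (Cmul (Cconj (f m b')) (f m b')))).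
        2:{ intros. rewrite (LE Q B f mu Hf); auto. ring. }
        rewrite sumC_scal_l. change (sumC Q (fun b' => Cmul (Cconj (f m b')) (f m b'))) with (inner Q (f m) (f m)).
        rewrite (spec_ortho _ _ _ _ Hf); auto. rewrite Nat.eqb_refl. ring. }
    split. { assert (HH := re_sq_sum P y). rewrite Hy in HH. simpl in HH. exact HH. }
    intros H0. rewrite H0 in Hy.
    assert (Hy0 := sq_zero P y ltac:(rewrite Hy; Ceq)).
    unfold cc. apply sumC_zero. intros i Hi.
    rewrite (sumC_ext Q _ (fun b => Cmul (Cconj (e k i)) (Cmul (Cconj (f m b)) (Th i b)))).
    2:{ intros. ring. }
    rewrite sumC_scal_l. fold (y i). rewrite Hy0; auto. ring. }
  destruct (Cscal_eq _ _ _ Step1) as [Heq|Hz].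
  - destruct (Req_dec (mu m) 0) as [H0|Hn0].
    + rewrite (proj2 Step2 H0). ring.
    + rewrite Heq, Hg; auto. destruct Step2; lra.
  - rewrite Hz. ring.
Qed.

Open Scope nat_scope.

Definition blk (m : nat) (F : nat -> Mat) : Mat :=
  fun i j => if Nat.eqb (i / m) (j / m) then F (i / m)%nat (i mod m)%nat (j mod m)%nat else C0.
Definition ublk (m : nat) (e : nat -> nat -> Vec) : nat -> Vec :=
  fun a i => Cmul (basis (a / m) (i / m)) (e (a / m)%nat (a mod m)%nat (i mod m)%nat).
Definition lblk (m : nat) (lam : nat -> nat -> R) : nat -> R :=
  fun a => lam (a / m)%nat (a mod m)%nat.

Lemma meq_trans n A B C' : meq n A B -> meq n B C' -> meq n A C'.
Proof. intros H1 H2 i j Hi Hj. rewrite H1, H2; auto. Qed.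
Lemma meq_sym n A B : meq n A B -> meq n B A.
Proof. intros H i j Hi Hj. rewrite H; auto. Qed.

Lemma mmul_meq n A A' B B' : meq n A A' -> meq n B B' -> meq n (mmul n A B) (mmul n A' B').
Proof. intros H1 H2 i j Hi Hj. unfold mmul. apply sumC_ext. intros. rewrite H1, H2; auto. Qed.
Lemma msub_meq n A A' B B' : meq n A A' -> meq n B B' -> meq n (msub A B) (msub A' B').
Proof. intros H1 H2 i j Hi Hj. unfold msub. rewrite H1, H2; auto. Qed.
Lemma mtrace_meq n A A' : meq n A A' -> mtrace n A = mtrace n A'.
Proof. intros H. unfold mtrace. apply sumC_ext. intros. apply H; auto. Qed.

Lemma spectral_meq p A A' e lam : spectral p A e lam -> meq p A A' -> spectral p A' e lam.
Proof. intros [H1 H2] H. split; auto. apply meq_trans with A; auto. apply meq_sym; auto. Qed.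

Lemma spectral_scale p A e lam c : spectral p A e lam ->
  spectral p (mscale (RtoC c) A) e (fun k => (lam k * c)%R).
Proof.
  intros [H1 H2]. split; auto. intros i j Hi Hj. unfold mscale at 1. rewrite H2; auto.
  unfold sumM. rewrite <- sumC_scal_l. apply sumC_ext. intros. unfold mscale, outer, RtoC. Ceq.
Qed.

Lemma basis_eq a b : basis a b = if Nat.eqb b a then C1 else C0.
Proof. reflexivity. Qed.

Ltac dm_simpl m a b Hb :=
  let H := fresh in destruct (divmod_eq a b m Hb) as [H ?]; rewrite ?H.

Lemma mfun_blk d m g e lam : (m <> 0)%nat -> forall i j, (i < d * m)%nat -> (j < d * m)%nat ->
  mfun (d * m) g (ublk m e) (lblk m lam) i j = blk m (fun x => mfun m g (e x) (lam x)) i j.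
Proof.
  intros Hm i j Hi Hj. unfold blk. rewrite mfun_entry, sumC_prod.
  destruct (divmod_lt i m d Hi) as [Hi1 Hi2]. destruct (divmod_lt j m d Hj) as [Hj1 Hj2].
  rewrite (sumC_ext d _ (fun a => if Nat.eqb (i / m) a then
        (if Nat.eqb (j / m) a then mfun m g (e a) (lam a) (i mod m) (j mod m) else C0) else C0)).
  2:{ intros a Ha. rewrite mfun_entry.
      destruct (Nat.eqb_spec (i / m) a); destruct (Nat.eqb_spec (j / m) a).
      - apply sumC_ext. intros b Hb. destruct (divmod_eq a b m Hb) as [E1 E2].
        unfold ublk, lblk. rewrite E1, E2, !basis_eq. subst a.
        rewrite e1, Nat.eqb_refl. rewrite Cconj_mul, Cconj_1. ring.
      - apply sumC_zero. intros b Hb. destruct (divmod_eq a b m Hb) as [E1 E2].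
        unfold ublk, lblk. rewrite E1, E2, !basis_eq.
        destruct (Nat.eqb_spec (j / m) a); [congruence|]. rewrite Cconj_mul, Cconj_0. ring.
      - apply sumC_zero. intros b Hb. destruct (divmod_eq a b m Hb) as [E1 E2].
        unfold ublk, lblk. rewrite E1, E2, !basis_eq.
        destruct (Nat.eqb_spec (i / m) a); [congruence|]. ring.
      - apply sumC_zero. intros b Hb. destruct (divmod_eq a b m Hb) as [E1 E2].
        unfold ublk, lblk. rewrite E1, E2, !basis_eq.
        destruct (Nat.eqb_spec (i / m) a); [congruence|]. ring. }
  destruct (Nat.eqb_spec (i / m) (j / m)) as [E|E].
  - rewrite <- E. rewrite (sumC_ext d _ (fun a => if Nat.eqb (i / m) a then mfun m g (e a) (lam a) (i mod m) (j mod m) else C0)).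
    + rewrite sumC_delta'. destruct (Nat.ltb_spec (i / m) d); [reflexivity|lia].
    + intros a Ha. destruct (Nat.eqb (i / m) a); reflexivity.
  - apply sumC_zero. intros a Ha. destruct (Nat.eqb_spec (i / m) a); destruct (Nat.eqb_spec (j / m) a); try reflexivity.
    congruence.
Qed.

Lemma BD d m F e lam : (m <> 0)%nat -> (forall x, (x < d)%nat -> spectral m (F x) (e x) (lam x)) ->
  spectral (d * m) (blk m F) (ublk m e) (lblk m lam).
Proof.
  intros Hm HF. split.
  - intros a a' Ha Ha'. unfold inner. rewrite sumC_prod.
    destruct (divmod_lt a m d Ha) as [Ha1 Ha2]. destruct (divmod_lt a' m d Ha') as [Ha1' Ha2'].
    rewrite (sumC_ext d _ (fun x => if Nat.eqb (a / m) x then (if Nat.eqb (a' / m) x then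
          inner m (e x (a mod m)) (e x (a' mod m)) else C0) else C0)).
    2:{ intros x Hx. unfold inner. unfold ublk.
        destruct (Nat.eqb_spec (a / m) x); destruct (Nat.eqb_spec (a' / m) x).
        - apply sumC_ext. intros b Hb. destruct (divmod_eq x b m Hb) as [E1 E2].
          rewrite E1, E2, !basis_eq. subst x. rewrite e1, Nat.eqb_refl. rewrite Cconj_mul, Cconj_1. ring.
        - apply sumC_zero. intros b Hb. destruct (divmod_eq x b m Hb) as [E1 E2].
          rewrite E1, E2, !basis_eq. destruct (Nat.eqb_spec x (a' / m)); [congruence|]. ring.
        - apply sumC_zero. intros b Hb. destruct (divmod_eq x b m Hb) as [E1 E2].
          rewrite E1, E2, !basis_eq. destruct (Nat.eqb_spec x (a / m)); [congruence|].
          rewrite Cconj_mul, Cconj_0. ring.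
        - apply sumC_zero. intros b Hb. destruct (divmod_eq x b m Hb) as [E1 E2].
          rewrite E1, E2, !basis_eq. destruct (Nat.eqb_spec x (a / m)); [congruence|].
          rewrite Cconj_mul, Cconj_0. ring. }
    destruct (Nat.eqb_spec (a / m) (a' / m)) as [E|E].
    + rewrite <- E. rewrite (sumC_ext d _ (fun x => if Nat.eqb (a / m) x then inner m (e x (a mod m)) (e x (a' mod m)) else C0)).
      * rewrite sumC_delta'. destruct (Nat.ltb_spec (a / m) d); [|lia].
        rewrite (spec_ortho _ _ _ _ (HF _ Ha1)); auto.
        destruct (Nat.eqb_spec (a mod m) (a' mod m)) as [E'|E'];
        destruct (Nat.eqb_spec a a') as [E''|E'']; auto.
        -- exfalso. apply E''. rewrite <- (divmod_recomp a m Hm), <- (divmod_recomp a' m Hm). congruence.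
        -- exfalso. apply E'. congruence.
      * intros x Hx. destruct (Nat.eqb (a / m) x); reflexivity.
    + destruct (Nat.eqb_spec a a'); [congruence|].
      apply sumC_zero. intros x Hx. destruct (Nat.eqb_spec (a / m) x); destruct (Nat.eqb_spec (a' / m) x); try reflexivity.
      congruence.
  - intros i j Hi Hj.
    change (sumM (d * m) (fun k => mscale (RtoC (lblk m lam k)) (outer (ublk m e k) (ublk m e k))) i j)
      with (mfun (d * m) (fun t => t) (ublk m e) (lblk m lam) i j).
    rewrite mfun_blk; auto. unfold blk.
    destruct (divmod_lt i m d Hi) as [Hi1 Hi2]. destruct (divmod_lt j m d Hj) as [Hj1 Hj2].
    destruct (Nat.eqb_spec (i / m) (j / m)); auto.
    destruct (HF (i / m)%nat Hi1) as [_ H2]. apply H2; auto.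
Qed.

Lemma blk_mul d m F G : (m <> 0)%nat -> forall i j, (i < d * m)%nat -> (j < d * m)%nat ->
  mmul (d * m) (blk m F) (blk m G) i j = blk m (fun x => mmul m (F x) (G x)) i j.
Proof.
  intros Hm i j Hi Hj. unfold mmul at 1. rewrite sumC_prod. unfold blk.
  destruct (divmod_lt i m d Hi) as [Hi1 Hi2]. destruct (divmod_lt j m d Hj) as [Hj1 Hj2].
  rewrite (sumC_ext d _ (fun a => if Nat.eqb (i / m) a then
        (if Nat.eqb (j / m) a then mmul m (F a) (G a) (i mod m) (j mod m) else C0) else C0)).
  2:{ intros a Ha. unfold mmul.
      destruct (Nat.eqb_spec (i / m) a); destruct (Nat.eqb_spec (j / m) a).
      - apply sumC_ext. intros b Hb. destruct (divmod_eq a b m Hb) as [E1 E2].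
        rewrite E1, E2. subst a. rewrite e0, Nat.eqb_refl. reflexivity.
      - apply sumC_zero. intros b Hb. destruct (divmod_eq a b m Hb) as [E1 E2].
        rewrite E1, E2. destruct (Nat.eqb_spec a (j / m)); [congruence|].
        destruct (Nat.eqb (i / m) a); ring.
      - apply sumC_zero. intros b Hb. destruct (divmod_eq a b m Hb) as [E1 E2].
        rewrite E1, E2. destruct (Nat.eqb_spec (i / m) a); [congruence|]. ring.
      - apply sumC_zero. intros b Hb. destruct (divmod_eq a b m Hb) as [E1 E2].
        rewrite E1, E2. destruct (Nat.eqb_spec (i / m) a); [congruence|]. ring. }
  destruct (Nat.eqb_spec (i / m) (j / m)) as [E|E].
  - rewrite <- E. rewrite (sumC_ext d _ (fun a => if Nat.eqb (i / m) a then mmul m (F a) (G a) (i mod m) (j mod m) else C0)).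
    + rewrite sumC_delta'. destruct (Nat.ltb_spec (i / m) d); [reflexivity|lia].
    + intros a Ha. destruct (Nat.eqb (i / m) a); reflexivity.
  - apply sumC_zero. intros a Ha. destruct (Nat.eqb_spec (i / m) a); destruct (Nat.eqb_spec (j / m) a); try reflexivity.
    congruence.
Qed.

Lemma blk_trace d m F : (m <> 0)%nat -> mtrace (d * m) (blk m F) = sumC d (fun x => mtrace m (F x)).
Proof.
  intros Hm. unfold mtrace. rewrite sumC_prod. apply sumC_ext. intros a Ha. apply sumC_ext. intros b Hb.
  unfold blk. destruct (divmod_eq a b m Hb) as [E1 E2]. rewrite E1, E2, Nat.eqb_refl. reflexivity.
Qed.

Lemma blk_sub m F G i j : msub (blk m F) (blk m G) i j = blk m (fun x => msub (F x) (G x)) i j.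
Proof. unfold msub, blk. destruct (Nat.eqb (i / m) (j / m)); [reflexivity|ring]. Qed.

Lemma blk_meq d m F G : (forall x, (x < d)%nat -> meq m (F x) (G x)) -> meq (d * m) (blk m F) (blk m G).
Proof.
  intros H i j Hi Hj. assert (m <> 0)%nat by (intro; subst; lia).
  destruct (divmod_lt i m d Hi) as [Hi1 Hi2]. destruct (divmod_lt j m d Hj) as [Hj1 Hj2].
  unfold blk. destruct (Nat.eqb_spec (i / m) (j / m)); [apply H; auto|reflexivity].
Qed.

Lemma cq_blk d m A : (m <> 0)%nat ->
  meq (d * m) (cq_state d m A) (blk m (fun x => mscale (RtoC (/ INR d)%R) (A x))).
Proof.
  intros Hm i j Hi Hj. unfold cq_state, sumM, blk, mscale, mkron, outer.
  destruct (divmod_lt i m d Hi) as [Hi1 Hi2]. destruct (divmod_lt j m d Hj) as [Hj1 Hj2].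
  rewrite (sumC_ext d _ (fun z => if Nat.eqb (i / m) z then
      (if Nat.eqb (j / m) z then Cmul (RtoC (/ INR d)%R) (A z (i mod m) (j mod m)) else C0) else C0)).
  2:{ intros z Hz. rewrite !basis_eq. destruct (Nat.eqb (i / m) z); destruct (Nat.eqb (j / m) z);
      rewrite ?Cconj_1, ?Cconj_0; ring. }
  destruct (Nat.eqb_spec (i / m) (j / m)) as [E|E].
  - rewrite <- E. rewrite (sumC_ext d _ (fun z => if Nat.eqb (i / m) z then Cmul (RtoC (/ INR d)%R) (A z (i mod m) (j mod m)) else C0)).
    + rewrite sumC_delta'. destruct (Nat.ltb_spec (i / m) d); [reflexivity|lia].
    + intros a Ha. destruct (Nat.eqb (i / m) a); reflexivity.
  - apply sumC_zero. intros a Ha. destruct (Nat.eqb_spec (i / m) a); destruct (Nat.eqb_spec (j / m) a); try reflexivity.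
    congruence.
Qed.

Lemma mkron_blk m B i j : mkron m idm B i j = blk m (fun _ => B) i j.
Proof. unfold mkron, idm, blk. destruct (Nat.eqb (i / m) (j / m)); ring. Qed.

Lemma ptrace1_cq d m A : (m <> 0)%nat -> forall b b', (b < m)%nat -> (b' < m)%nat ->
  ptrace1 d m (cq_state d m A) b b' = sumC d (fun z => Cmul (RtoC (/ INR d)%R) (A z b b')).
Proof.
  intros Hm b b' Hb Hb'. unfold ptrace1. apply sumC_ext. intros z Hz.
  rewrite (cq_blk d m A Hm); try nia. unfold blk, mscale.
  destruct (divmod_eq z b m Hb) as [E1 E2]. destruct (divmod_eq z b' m Hb') as [E3 E4].
  rewrite E1, E2, E3, E4, Nat.eqb_refl. reflexivity.
Qed.

Lemma mtrace_scale m c A B : mtrace m (mmul m (mscale c A) B) = Cmul c (mtrace m (mmul m A B)).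
Proof.
  unfold mtrace, mmul, mscale. rewrite <- sumC_scal_l. apply sumC_ext. intros.
  rewrite <- sumC_scal_l. apply sumC_ext. intros. ring.
Qed.

Lemma BL d m A ea la fb lb : (m <> 0)%nat ->
  (forall x, (x < d)%nat -> spectral m (A x) (ea x) (la x)) ->
  spectral m (ptrace1 d m (cq_state d m A)) fb lb ->
  let rho := cq_state d m A in
  let X := msub (mlog (d * m) rho) (mlog (d * m) (mkron m idm (ptrace1 d m rho))) in
  let RA := fun x => mfun m (fun t => ln (t * / INR d)) (ea x) (la x) in
  let RB := mfun m ln fb lb in
  mtrace (d * m) (mmul (d * m) rho X) =
    Cmul (RtoC (/ INR d)%R) (sumC d (fun x => mtrace m (mmul m (A x) (msub (RA x) RB)))) /\
  mtrace (d * m) (mmul (d * m) rho (mmul (d * m) X X)) =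
    Cmul (RtoC (/ INR d)%R) (sumC d (fun x => mtrace m (mmul m (A x) (mmul m (msub (RA x) RB) (msub (RA x) RB))))).
Proof.
  intros Hm HA HB rho X RA RB.
  set (Fr := fun x => mscale (RtoC (/ INR d)%R) (A x)).
  assert (Hr : meq (d * m) rho (blk m Fr)) by (apply cq_blk; auto).
  assert (Hsr : spectral (d * m) rho (ublk m ea) (lblk m (fun x k => (la x k * / INR d)%R))).
  { apply spectral_meq with (blk m Fr).
    - apply BD; auto. intros. apply spectral_scale; auto.
    - apply meq_sym; auto. }
  assert (HL1 : meq (d * m) (mlog (d * m) rho) (blk m RA)).
  { eapply meq_trans. apply ML. exact Hsr. intros i j Hi Hj. rewrite mfun_blk; auto. }
  assert (Hsb : spectral (d * m) (mkron m idm (ptrace1 d m rho)) (ublk m (fun _ => fb)) (lblk m (fun _ => lb))).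
  { apply spectral_meq with (blk m (fun _ => ptrace1 d m rho)).
    - apply BD; auto.
    - intros i j _ _. rewrite mkron_blk. reflexivity. }
  assert (HL2 : meq (d * m) (mlog (d * m) (mkron m idm (ptrace1 d m rho))) (blk m (fun _ => RB))).
  { eapply meq_trans. apply ML. exact Hsb. intros i j Hi Hj. rewrite mfun_blk; auto. }
  assert (HX : meq (d * m) X (blk m (fun x => msub (RA x) RB))).
  { intros i j Hi Hj. transitivity (msub (blk m RA) (blk m (fun _ => RB)) i j).
    - unfold X, msub. rewrite HL1, HL2; auto.
    - apply blk_sub. }
  split.
  - rewrite (mtrace_meq _ _ (mmul (d * m) (blk m Fr) (blk m (fun x => msub (RA x) RB)))).
    2:{ apply mmul_meq; auto. }
    rewrite (mtrace_meq _ _ (blk m (fun x => mmul m (Fr x) (msub (RA x) RB)))).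
    2:{ intros i j Hi Hj. apply blk_mul; auto. }
    rewrite blk_trace; auto. unfold Fr. rewrite <- sumC_scal_l. apply sumC_ext. intros. apply mtrace_scale.
  - rewrite (mtrace_meq _ _ (mmul (d * m) (blk m Fr) (blk m (fun x => mmul m (msub (RA x) RB) (msub (RA x) RB))))).
    2:{ apply mmul_meq; auto. eapply meq_trans. apply mmul_meq; [exact HX|exact HX].
        intros i j Hi Hj. apply blk_mul; auto. }
    rewrite (mtrace_meq _ _ (blk m (fun x => mmul m (Fr x) (mmul m (msub (RA x) RB) (msub (RA x) RB))))).
    2:{ intros i j Hi Hj. apply blk_mul; auto. }
    rewrite blk_trace; auto. unfold Fr. rewrite <- sumC_scal_l. apply sumC_ext. intros. apply mtrace_scale.
Qed.

Open Scope R_scope.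

Definition cf (d x z : nat) : C :=
  Cmul (RtoC (/ sqrt (INR d))) (Cexpi (2 * PI * INR (x * z) / INR d)).

Lemma Cexpi_add a b : Cexpi (a + b) = Cmul (Cexpi a) (Cexpi b).
Proof. apply C_ext; unfold Cexpi, Cmul; simpl; [rewrite cos_plus|rewrite sin_plus]; ring. Qed.

Lemma Cexpi_0 : Cexpi 0 = C1.
Proof. apply C_ext; unfold Cexpi; simpl; [apply cos_0|apply sin_0]. Qed.

Lemma Cexpi_2PIn k : Cexpi (2 * PI * INR k) = C1.
Proof.
  apply C_ext; unfold Cexpi; simpl.
  - replace (2 * PI * INR k) with (0 + 2 * INR k * PI) by ring. rewrite cos_period. apply cos_0.
  - replace (2 * PI * INR k) with (0 + 2 * INR k * PI) by ring. rewrite sin_period. apply sin_0.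
Qed.

Lemma Cexpi_conj a : Cconj (Cexpi a) = Cexpi (- a).
Proof. apply C_ext; unfold Cexpi, Cconj; simpl; [rewrite cos_neg|rewrite sin_neg]; ring. Qed.

Lemma Cmul_integral a b : Cmul a b = C0 -> a <> C0 -> b = C0.
Proof.
  destruct a as [p q], b as [r s]. unfold Cmul, C0; simpl. intros H Ha. injection H as H1 H2.
  assert (Hpq : p * p + q * q <> 0).
  { intro Hz. apply Ha. assert (p = 0) by nra. assert (q = 0) by nra. subst. reflexivity. }
  assert (Hr : (p * p + q * q) * r = p * (p * r - q * s) + q * (p * s + q * r)) by ring.
  assert (Hs : (p * p + q * q) * s = p * (p * s + q * r) - q * (p * r - q * s)) by ring.
  rewrite H1, H2 in Hr, Hs. rewrite Rmult_0_r, Rmult_0_r, Rplus_0_r in Hr.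
  rewrite Rmult_0_r, Rmult_0_r, Rminus_0_r in Hs.
  apply Rmult_integral in Hr. apply Rmult_integral in Hs.
  destruct Hr; [contradiction|]. destruct Hs; [contradiction|]. subst. reflexivity.
Qed.

Lemma geom n t : Cmul (Csub (Cexpi t) C1) (sumC n (fun x => Cexpi (INR x * t))) = Csub (Cexpi (INR n * t)) C1.
Proof.
  induction n.
  - rewrite sumC_0. simpl. rewrite Rmult_0_l, Cexpi_0. ring.
  - rewrite sumC_S. rewrite S_INR. replace ((INR n + 1) * t) with (INR n * t + t) by ring.
    rewrite Cexpi_add. transitivity (Cadd (Cmul (Csub (Cexpi t) C1) (sumC n (fun x => Cexpi (INR x * t))))
       (Cmul (Csub (Cexpi t) C1) (Cexpi (INR n * t)))); [ring|]. rewrite IHn. ring.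
Qed.

Lemma sumC_const_R n (c : C) : sumC n (fun _ => c) = Cmul (RtoC (INR n)) c.
Proof.
  induction n. rewrite sumC_0. simpl. Ceq. rewrite sumC_S, IHn, S_INR. Ceq.
Qed.

Lemma cf_prod d x z z' : (0 < d)%nat ->
  Cmul (cf d x z) (Cconj (cf d x z')) =
  Cmul (RtoC (/ INR d)) (Cexpi (INR x * (2 * PI * (INR z - INR z') / INR d))).
Proof.
  intros Hd. assert (HdR : 0 < INR d) by (apply lt_0_INR; lia).
  unfold cf. rewrite Cconj_mul, Cconj_R, Cexpi_conj.
  transitivity (Cmul (RtoC (/ sqrt (INR d) * / sqrt (INR d)))
      (Cmul (Cexpi (2 * PI * INR (x * z) / INR d)) (Cexpi (- (2 * PI * INR (x * z') / INR d))))).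
  { unfold RtoC. Ceq. }
  rewrite <- Cexpi_add. rewrite <- Rinv_mult, sqrt_sqrt by lra.
  f_equal. f_equal. rewrite !mult_INR. field. lra.
Qed.

Lemma char_orth d z z' : (0 < d)%nat -> (z < d)%nat -> (z' < d)%nat ->
  sumC d (fun x => Cmul (cf d x z) (Cconj (cf d x z'))) = if Nat.eqb z z' then C1 else C0.
Proof.
  intros Hd Hz Hz'. assert (HdR : 0 < INR d) by (apply lt_0_INR; lia).
  rewrite (sumC_ext _ _ (fun x => Cmul (RtoC (/ INR d)) (Cexpi (INR x * (2 * PI * (INR z - INR z') / INR d))))).
  2:{ intros. apply cf_prod; auto. }
  rewrite sumC_scal_l.
  set (t := 2 * PI * (INR z - INR z') / INR d).
  destruct (Nat.eqb_spec z z') as [E|E].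
  - subst z'. unfold t. rewrite (sumC_ext _ _ (fun _ => C1)).
    + rewrite sumC_const_R. apply C_ext; simpl; field; lra.
    + intros. replace (INR i * (2 * PI * (INR z - INR z) / INR d)) with 0 by (field; lra). apply Cexpi_0.
  - assert (Hw : Csub (Cexpi t) C1 <> C0).
    { intro H. assert (Hre := f_equal re H). unfold Csub, Cexpi, Cadd, Copp, C1, C0 in Hre; simpl in Hre.
      assert (Hc : cos t = 1) by lra.
      replace t with (2 * (PI * (INR z - INR z') / INR d)) in Hc by (unfold t; field; lra).
      rewrite cos_2a_sin in Hc.
      assert (Hs : sin (PI * (INR z - INR z') / INR d) <> 0).
      { assert (Hz1 : INR z < INR d) by (apply lt_INR; auto).
        assert (Hz1' : INR z' < INR d) by (apply lt_INR; auto).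
        assert (Hz0 : 0 <= INR z) by apply pos_INR. assert (Hz0' : 0 <= INR z') by apply pos_INR.
        destruct (Nat.lt_total z z') as [Hlt|[Hlt|Hlt]].
        - assert (INR z < INR z') by (apply lt_INR; auto).
          replace (PI * (INR z - INR z') / INR d) with (- (PI * (INR z' - INR z) / INR d)) by (field; lra).
          rewrite sin_neg. apply Ropp_neq_0_compat. apply Rgt_not_eq. apply sin_gt_0.
          + apply Rdiv_lt_0_compat; [|lra]. apply Rmult_lt_0_compat; [apply PI_RGT_0|lra].
          + apply (Rmult_lt_reg_r (INR d)); auto. unfold Rdiv. rewrite Rmult_assoc, Rinv_l by lra.
            assert (PI > 0) by apply PI_RGT_0. nra.
        - lia.
        - assert (INR z' < INR z) by (apply lt_INR; auto).
          apply Rgt_not_eq. apply sin_gt_0.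
          + apply Rdiv_lt_0_compat; [|lra]. apply Rmult_lt_0_compat; [apply PI_RGT_0|lra].
          + apply (Rmult_lt_reg_r (INR d)); auto. unfold Rdiv. rewrite Rmult_assoc, Rinv_l by lra.
            assert (PI > 0) by apply PI_RGT_0. nra. }
      apply Hs. nra. }
    assert (Hg := geom d t).
    replace (INR d * t) with (2 * PI * INR z - 2 * PI * INR z') in Hg by (unfold t; field; lra).
    unfold Rminus in Hg. rewrite Cexpi_add in Hg. rewrite <- Cexpi_conj, !Cexpi_2PIn, Cconj_1 in Hg.
    assert (H0 : sumC d (fun x => Cexpi (INR x * t)) = C0).
    { apply (Cmul_integral (Csub (Cexpi t) C1)); auto. rewrite Hg. unfold Csub. ring. }
    rewrite H0. ring.
Qed.

Lemma cf_norm d x z : (0 < d)%nat -> Cmul (cf d x z) (Cconj (cf d x z)) = RtoC (/ INR d).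
Proof.
  intros Hd. assert (HdR : 0 < INR d) by (apply lt_0_INR; lia). rewrite cf_prod; auto.
  replace (INR x * (2 * PI * (INR z - INR z) / INR d)) with 0 by (field; lra). rewrite Cexpi_0.
  Ceq.
Qed.

Open Scope nat_scope.

Lemma gram_herm p q (Y : nat -> nat -> C) (A : Mat) :
  (forall i j, i < p -> j < p -> A i j = sumC q (fun b => Cmul (Y i b) (Cconj (Y j b)))) ->
  hermitian p A.
Proof.
  intros H i j Hi Hj. unfold adj. rewrite !H; auto. rewrite Cconj_sum. apply sumC_ext. intros.
  rewrite Cconj_mul, Cconj_conj. ring.
Qed.

Lemma mfun_herm n g e lam i j : Cconj (mfun n g e lam j i) = mfun n g e lam i j.
Proof.
  rewrite !mfun_entry, Cconj_sum. apply sumC_ext. intros. rewrite !Cconj_mul, Cconj_R, Cconj_conj. ring.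
Qed.

Section Dual.
Variables (d n nD : nat) (phi : nat -> Vec) (W : nat -> Mat).
Hypothesis hd : 0 < d.
Hypothesis hnD : nD <> 0.
Hypothesis hphi : forall z, z < d -> purifies n nD (phi z) (W z).

Definition Th x i b := theta d n nD phi x ((i / nD) * (n * nD) + b * nD + i mod nD).

Lemma fourier_val x z : z < d -> fourier d x z = cf d x z.
Proof.
  intros Hz. unfold fourier, sumV, vscale.
  rewrite (sumC_ext _ _ (fun z' => if Nat.eqb z z' then cf d x z' else C0)).
  - rewrite sumC_delta'. destruct (Nat.ltb_spec z d); [reflexivity|lia].
  - intros z' Hz'. rewrite basis_eq. unfold cf. destruct (Nat.eqb_spec z z'); ring.
Qed.

Lemma theta_val x z t : z < d -> t < n * nD ->
  theta d n nD phi x (z * (n * nD) + t) = Cmul (cf d x z) (phi z t).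
Proof.
  intros Hz Ht. unfold theta, Viso, sumV, vscale, vkron.
  destruct (divmod_eq z t (n * nD) Ht) as [E1 E2]. rewrite E1, E2.
  rewrite (sumC_ext _ _ (fun z' => if Nat.eqb z z' then Cmul (cf d x z') (phi z' t) else C0)).
  - rewrite sumC_delta'. destruct (Nat.ltb_spec z d); [reflexivity|lia].
  - intros z' Hz'. rewrite basis_eq. destruct (Nat.eqb_spec z z'); [subst; rewrite fourier_val; auto; ring|ring].
Qed.

Lemma Th_val x i b : i < d * nD -> b < n ->
  Th x i b = Cmul (cf d x (i / nD)) (phi (i / nD) (b * nD + i mod nD)).
Proof.
  intros Hi Hb. destruct (divmod_lt i nD d Hi) as [H1 H2]. unfold Th.
  rewrite <- Nat.add_assoc. apply theta_val; auto. nia.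
Qed.

Lemma Th_val' x z e b : z < d -> e < nD -> b < n ->
  Th x (z * nD + e) b = Cmul (cf d x z) (phi z (b * nD + e)).
Proof.
  intros Hz He Hb. rewrite Th_val; try nia. destruct (divmod_eq z e nD He) as [E1 E2]. rewrite E1, E2. reflexivity.
Qed.

Lemma W_gram z b b' : z < d -> b < n -> b' < n ->
  W z b b' = sumC nD (fun e => Cmul (phi z (b * nD + e)) (Cconj (phi z (b' * nD + e)))).
Proof. intros Hz Hb Hb'. rewrite <- (hphi z Hz b b' Hb Hb'). reflexivity. Qed.

Definition rhoB := ptrace1 d n (cq_state d n W).

Lemma rhoB_val b b' : n <> 0 -> b < n -> b' < n ->
  rhoB b b' = sumC d (fun z => Cmul (RtoC (/ INR d)%R) (W z b b')).
Proof. intros Hn Hb Hb'. unfold rhoB. rewrite ptrace1_cq; auto. Qed.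

Lemma rhoB_gram x b b' : n <> 0 -> b < n -> b' < n ->
  rhoB b b' = sumC (d * nD) (fun i => Cmul (Th x i b) (Cconj (Th x i b'))).
Proof.
  intros Hn Hb Hb'. rewrite rhoB_val; auto. rewrite sumC_prod. apply sumC_ext. intros z Hz.
  rewrite W_gram; auto. rewrite <- sumC_scal_l. apply sumC_ext. intros e He.
  rewrite !Th_val'; auto. rewrite <- (cf_norm d x z hd). rewrite Cconj_mul. ring.
Qed.

Definition om z := ptrace1 n nD (outer (phi z) (phi z)).

Lemma om_gram z e e' : om z e e' = sumC n (fun b => Cmul (phi z (b * nD + e)) (Cconj (phi z (b * nD + e')))).
Proof. reflexivity. Qed.

Lemma Wd_gram x i j : dual_channel d n nD phi x i j = sumC n (fun b => Cmul (Th x i b) (Cconj (Th x j b))).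
Proof. reflexivity. Qed.

Lemma sigmaCD_blk : n <> 0 ->
  meq (d * nD) (ptrace1 d (d * nD) (cq_state d (d * nD) (dual_channel d n nD phi)))
      (blk nD (fun z => mscale (RtoC (/ INR d)%R) (om z))).
Proof.
  intros Hn i j Hi Hj. rewrite ptrace1_cq; auto; [|nia].
  destruct (divmod_lt i nD d Hi) as [Hi1 Hi2]. destruct (divmod_lt j nD d Hj) as [Hj1 Hj2].
  rewrite (sumC_ext _ _ (fun x => sumC n (fun b => Cmul (Cmul (RtoC (/ INR d)%R)
        (Cmul (cf d x (i / nD)) (Cconj (cf d x (j / nD)))))
        (Cmul (phi (i / nD) (b * nD + i mod nD)) (Cconj (phi (j / nD) (b * nD + j mod nD))))))).
  2:{ intros x Hx. rewrite Wd_gram, <- sumC_scal_l. apply sumC_ext. intros b Hb.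
      rewrite !Th_val; auto. rewrite Cconj_mul. ring. }
  rewrite sumC_swap.
  rewrite (sumC_ext _ _ (fun b => Cmul (Cmul (RtoC (/ INR d)%R)
        (sumC d (fun x => Cmul (cf d x (i / nD)) (Cconj (cf d x (j / nD))))))
        (Cmul (phi (i / nD) (b * nD + i mod nD)) (Cconj (phi (j / nD) (b * nD + j mod nD)))))).
  2:{ intros b Hb. rewrite <- sumC_scal_l, <- sumC_scal_r. apply sumC_ext. intros. reflexivity. }
  rewrite char_orth; auto. unfold blk, mscale.
  destruct (Nat.eqb_spec (i / nD) (j / nD)) as [E|E].
  - rewrite om_gram, <- sumC_scal_l. apply sumC_ext. intros. rewrite E. ring.
  - apply sumC_zero. intros. ring.
Qed.

End Dual.

Open Scope nat_scope.

Lemma HAdj n (M : Mat) (u w : nat -> C) :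
  (forall i j, i < n -> j < n -> Cconj (M j i) = M i j) ->
  sumC n (fun k => Cmul (Cconj (u k)) (sumC n (fun b => Cmul (M k b) (w b)))) =
  sumC n (fun b => Cmul (Cconj (sumC n (fun k => Cmul (M b k) (u k)))) (w b)).
Proof.
  intros HM.
  transitivity (sumC n (fun k => sumC n (fun b => Cmul (Cmul (M k b) (Cconj (u k))) (w b)))).
  - apply sumC_ext; intros. rewrite <- sumC_scal_l. apply sumC_ext; intros; ring.
  - rewrite sumC_swap. apply sumC_ext. intros b Hb. rewrite Cconj_sum, <- sumC_scal_r.
    apply sumC_ext. intros k Hk. rewrite Cconj_mul, HM; auto.
Qed.

Lemma PXa n m (V : nat -> nat -> C) (Wm Y : Mat) :
  (forall b k, b < n -> k < n -> Wm b k = sumC m (fun e => Cmul (V e b) (Cconj (V e k)))) ->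
  mtrace n (mmul n Wm Y) = sumC m (fun e => sumC n (fun k => Cmul (Cconj (V e k)) (sumC n (fun b => Cmul (Y k b) (V e b))))).
Proof.
  intros HW. unfold mtrace, mmul.
  rewrite (sumC_ext n _ (fun b => sumC n (fun k => sumC m (fun e => Cmul (Cmul (V e b) (Cconj (V e k))) (Y k b))))).
  2:{ intros b Hb. apply sumC_ext. intros k Hk. rewrite HW; auto. symmetry. apply sumC_scal_r. }
  rewrite sum3_rev. apply sumC_ext. intros e He. apply sumC_ext. intros k Hk.
  rewrite <- sumC_scal_l. apply sumC_ext. intros. ring.
Qed.

Lemma TRA N n (Th : nat -> nat -> C) (Y : Mat) :
  mtrace N (mmul N (fun i j => sumC n (fun b => Cmul (Th i b) (Cconj (Th j b)))) Y) =
  sumC n (fun b => sumC N (fun j => Cmul (Cconj (Th j b)) (sumC N (fun i => Cmul (Y j i) (Th i b))))).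
Proof.
  unfold mtrace, mmul.
  rewrite (sumC_ext N _ (fun i => sumC N (fun j => sumC n (fun b => Cmul (Cmul (Th i b) (Cconj (Th j b))) (Y j i))))).
  2:{ intros i Hi. apply sumC_ext. intros j Hj. symmetry. apply sumC_scal_r. }
  rewrite sum3_rev. apply sumC_ext. intros b Hb. apply sumC_ext. intros j Hj.
  rewrite <- sumC_scal_l. apply sumC_ext. intros. ring.
Qed.

Lemma MMsq n (M : Mat) (v : nat -> C) :
  (forall i j, i < n -> j < n -> Cconj (M j i) = M i j) ->
  sumC n (fun k => Cmul (Cconj (v k)) (sumC n (fun b => Cmul (mmul n M M k b) (v b)))) =
  sumC n (fun c => Cmul (Cconj (sumC n (fun b => Cmul (M c b) (v b)))) (sumC n (fun b => Cmul (M c b) (v b)))).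
Proof.
  intros HM.
  rewrite (sumC_ext n (fun k => Cmul (Cconj (v k)) _) (fun k => Cmul (Cconj (v k)) (sumC n (fun c => Cmul (M k c) (sumC n (fun b => Cmul (M c b) (v b))))))).
  - apply HAdj; auto.
  - intros k Hk. f_equal. unfold mmul.
    rewrite (sumC_ext n (fun b => Cmul (sumC n _) (v b)) (fun b => sumC n (fun c => Cmul (M k c) (Cmul (M c b) (v b))))).
    + rewrite sumC_swap. apply sumC_ext. intros. rewrite sumC_scal_l. reflexivity.
    + intros. rewrite <- sumC_scal_r. apply sumC_ext. intros. ring.
Qed.

Section PX.
Variables (d n nD : nat) (Th : nat -> nat -> C) (Dm : Mat) (M : nat -> Mat) (cz : nat -> C)
  (Ph : nat -> nat -> C) (Wz : nat -> Mat).
Hypothesis hnD : nD <> 0.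
Hypothesis hTh : forall z e b, z < d -> e < nD -> b < n -> Th (z * nD + e) b = Cmul (cz z) (Ph z (b * nD + e)).
Hypothesis hcz : forall z, z < d -> Cmul (cz z) (Cconj (cz z)) = RtoC (/ INR d)%R.
Hypothesis hW : forall z b k, z < d -> b < n -> k < n ->
  Wz z b k = sumC nD (fun e => Cmul (Ph z (b * nD + e)) (Cconj (Ph z (k * nD + e)))).
Hypothesis hpsi : forall j b, j < d * nD -> b < n ->
  sumC (d * nD) (fun i => Cmul (Dm j i) (Th i b)) = sumC n (fun b' => Cmul (M (j / nD) b b') (Th j b')).

Lemma PX1 :
  mtrace (d * nD) (mmul (d * nD) (fun i j => sumC n (fun b => Cmul (Th i b) (Cconj (Th j b)))) Dm) =
  Cmul (RtoC (/ INR d)%R) (sumC d (fun z => mtrace n (mmul n (Wz z) (M z)))).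
Proof.
  rewrite TRA.
  rewrite (sumC_ext n _ (fun b => sumC (d * nD) (fun j => Cmul (Cconj (Th j b)) (sumC n (fun b' => Cmul (M (j / nD) b b') (Th j b')))))).
  2:{ intros b Hb. apply sumC_ext. intros j Hj. rewrite hpsi; auto. }
  rewrite sumC_swap, sumC_prod, <- sumC_scal_l. apply sumC_ext. intros z Hz.
  rewrite (PXa n nD (fun e b => Ph z (b * nD + e))); [|intros; apply hW; auto].
  rewrite <- sumC_scal_l. apply sumC_ext. intros e He.
  rewrite <- sumC_scal_l. apply sumC_ext. intros k Hk.
  destruct (divmod_eq z e nD He) as [E1 _]. rewrite E1.
  rewrite hTh; auto.
  rewrite (sumC_ext n (fun b' => Cmul _ (Th (z * nD + e) b')) (fun b' => Cmul (cz z) (Cmul (M z k b') (Ph z (b' * nD + e))))).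
  2:{ intros. rewrite hTh; auto. ring. }
  rewrite sumC_scal_l, Cconj_mul, <- (hcz z Hz). ring.
Qed.

Hypothesis hM : forall z i j, z < d -> i < n -> j < n -> Cconj (M z j i) = M z i j.
Hypothesis hD : forall i j, i < d * nD -> j < d * nD -> Cconj (Dm j i) = Dm i j.

Lemma PX2 :
  mtrace (d * nD) (mmul (d * nD) (fun i j => sumC n (fun b => Cmul (Th i b) (Cconj (Th j b)))) (mmul (d * nD) Dm Dm)) =
  Cmul (RtoC (/ INR d)%R) (sumC d (fun z => mtrace n (mmul n (Wz z) (mmul n (M z) (M z))))).
Proof.
  rewrite TRA.
  set (psi := fun l b => sumC (d * nD) (fun i => Cmul (Dm l i) (Th i b))).
  rewrite (sumC_ext n _ (fun b => sumC (d * nD) (fun l => Cmul (Cconj (psi l b)) (psi l b)))).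
  2:{ intros b Hb. transitivity (sumC (d * nD) (fun j => Cmul (Cconj (Th j b)) (sumC (d * nD) (fun l => Cmul (Dm j l) (psi l b))))).
      2:{ unfold psi. apply HAdj; auto. }
      apply sumC_ext. intros j Hj. f_equal. unfold mmul, psi.
      rewrite (sumC_ext _ (fun i => Cmul (sumC _ _) (Th i b)) (fun i => sumC (d * nD) (fun l => Cmul (Dm j l) (Cmul (Dm l i) (Th i b))))).
      - rewrite sumC_swap. apply sumC_ext. intros. rewrite sumC_scal_l. reflexivity.
      - intros. rewrite <- sumC_scal_r. apply sumC_ext. intros. ring. }
  rewrite sumC_swap, sumC_prod, <- sumC_scal_l. apply sumC_ext. intros z Hz.
  rewrite (PXa n nD (fun e b => Ph z (b * nD + e))); [|intros; apply hW; auto].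
  rewrite <- sumC_scal_l. apply sumC_ext. intros e He.
  rewrite MMsq; [|intros; apply hM; auto].
  rewrite <- sumC_scal_l. apply sumC_ext. intros b Hb.
  assert (Hp : psi (z * nD + e) b = Cmul (cz z) (sumC n (fun b' => Cmul (M z b b') (Ph z (b' * nD + e))))).
  { unfold psi. rewrite hpsi; [|nia|auto]. destruct (divmod_eq z e nD He) as [E1 _]. rewrite E1.
    rewrite <- sumC_scal_l. apply sumC_ext. intros. rewrite hTh; auto. ring. }
  rewrite Hp, Cconj_mul. rewrite <- (hcz z Hz). ring.
Qed.
End PX.

Open Scope nat_scope.

Lemma choose_dec dim bound (P : nat -> Mat) : (forall z, z < bound -> hermitian dim (P z)) ->
  exists E L, forall z, z < bound -> spectral dim (P z) (E z) (L z).
Proof.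
  intros HP.
  assert (H : forall z, exists el : (nat -> Vec) * (nat -> R), z < bound -> spectral dim (P z) (fst el) (snd el)).
  { intros z. destruct (Nat.lt_ge_cases z bound) as [h|h].
    - destruct (Tr.SE dim (P z) (HP z h)) as [e [l Hs]]. exists (e, l); auto.
    - exists ((fun _ _ => C0), (fun _ => 0%R)); intros; lia. }
  destruct (choice _ H) as [f Hf]. exists (fun z => fst (f z)), (fun z => snd (f z)). auto.
Qed.

Lemma sum_idm_r n (F : nat -> C) i : i < n -> sumC n (fun k => Cmul (F k) (idm k i)) = F i.
Proof.
  intros Hi. rewrite (sumC_ext _ _ (fun k => if Nat.eqb k i then F k else C0)).
  - rewrite sumC_delta. destruct (Nat.ltb_spec i n); [reflexivity|lia].
  - intros k _. unfold idm. destruct (Nat.eqb k i); ring.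
Qed.
Lemma sum_idm_l n (F : nat -> C) i : i < n -> sumC n (fun k => Cmul (idm i k) (F k)) = F i.
Proof.
  intros Hi. rewrite (sumC_ext _ _ (fun k => if Nat.eqb i k then F k else C0)).
  - rewrite sumC_delta'. destruct (Nat.ltb_spec i n); [reflexivity|lia].
  - intros k _. unfold idm. destruct (Nat.eqb i k); ring.
Qed.

Lemma Q_expand n B fb lb c : spectral n B fb lb ->
  meq n (mfun n (fun t => (ln t - ln c)%R) fb lb) (fun i j => Csub (mfun n ln fb lb i j) (Cmul (RtoC (ln c)) (idm i j))).
Proof.
  intros Hs i j Hi Hj. rewrite !mfun_entry.
  assert (Hc := compl n fb (spec_ortho _ _ _ _ Hs) i j Hi Hj).
  unfold idm. rewrite <- Hc. rewrite <- sumC_scal_l. unfold Csub. rewrite <- sumC_opp, <- sumC_add.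
  apply sumC_ext. intros. unfold RtoC. Ceq.
Qed.

Lemma tr_lin3 n (Wm A0 B0 : Mat) a b :
  mtrace n (mmul n Wm (fun k i => Cadd (Cadd (A0 k i) (Cmul (RtoC a) (B0 k i))) (Cmul (RtoC b) (idm k i)))) =
  Cadd (Cadd (mtrace n (mmul n Wm A0)) (Cmul (RtoC a) (mtrace n (mmul n Wm B0)))) (Cmul (RtoC b) (mtrace n Wm)).
Proof.
  unfold mtrace at 1. unfold mmul at 1.
  rewrite (sumC_ext n _ (fun i => Cadd (Cadd (mmul n Wm A0 i i) (Cmul (RtoC a) (mmul n Wm B0 i i))) (Cmul (RtoC b) (Wm i i)))).
  - rewrite !sumC_add, !sumC_scal_l. reflexivity.
  - intros i Hi. unfold mmul. rewrite <- (sum_idm_r n (Wm i) i Hi).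
    rewrite <- !sumC_scal_l, <- !sumC_add. apply sumC_ext. intros. ring.
Qed.

Lemma tr_lin2 n (Wm A0 : Mat) a b :
  mtrace n (mmul n Wm (fun k i => Cadd (Cmul (RtoC a) (A0 k i)) (Cmul (RtoC b) (idm k i)))) =
  Cadd (Cmul (RtoC a) (mtrace n (mmul n Wm A0))) (Cmul (RtoC b) (mtrace n Wm)).
Proof.
  unfold mtrace at 1. unfold mmul at 1.
  rewrite (sumC_ext n _ (fun i => Cadd (Cmul (RtoC a) (mmul n Wm A0 i i)) (Cmul (RtoC b) (Wm i i)))).
  - rewrite !sumC_add, !sumC_scal_l. reflexivity.
  - intros i Hi. unfold mmul. rewrite <- (sum_idm_r n (Wm i) i Hi).
    rewrite <- !sumC_scal_l, <- !sumC_add. apply sumC_ext. intros. ring.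
Qed.

Lemma ALG n (Wm Y M : Mat) (L : R) :
  meq n M (fun k i => Csub (Copp (Y k i)) (Cmul (RtoC L) (idm k i))) ->
  mtrace n (mmul n Wm M) = Cadd (Cmul (RtoC (-1)) (mtrace n (mmul n Wm Y))) (Cmul (RtoC (- L)) (mtrace n Wm)) /\
  mtrace n (mmul n Wm (mmul n M M)) =
    Cadd (Cadd (mtrace n (mmul n Wm (mmul n Y Y))) (Cmul (RtoC (2 * L)) (mtrace n (mmul n Wm Y))))
         (Cmul (RtoC (L * L)) (mtrace n Wm)).
Proof.
  intros HM. split.
  - rewrite <- tr_lin2. apply mtrace_meq. apply mmul_meq; [intros ? ? ? ?; reflexivity|].
    intros k i Hk Hi. rewrite HM; auto. unfold Csub, RtoC. Ceq.
  - rewrite <- tr_lin3. apply mtrace_meq. apply mmul_meq; [intros ? ? ? ?; reflexivity|].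
    intros k i Hk Hi. unfold mmul at 1.
    rewrite (sumC_ext n _ (fun c => Cadd (Cadd (Cadd (Cmul (Y k c) (Y c i))
         (Cmul (RtoC L) (Cmul (idm k c) (Y c i)))) (Cmul (RtoC L) (Cmul (Y k c) (idm c i))))
         (Cmul (RtoC (L * L)) (Cmul (idm k c) (idm c i))))).
    2:{ intros. rewrite !HM; auto. unfold Csub, RtoC. Ceq. }
    rewrite !sumC_add, !sumC_scal_l, sum_idm_l, sum_idm_r, sum_idm_l; auto.
    unfold mmul. unfold RtoC. Ceq.
Qed.

Section Main.
Variables (d n nD : nat) (phi : nat -> Vec) (W : nat -> Mat).
Hypothesis hd : 0 < d.
Hypothesis hn : n <> 0.
Hypothesis hnD : nD <> 0.
Hypothesis hphi : forall z, z < d -> purifies n nD (phi z) (W z).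
Variables (ea : nat -> nat -> Vec) (la : nat -> nat -> R) (fb : nat -> Vec) (lb : nat -> R)
  (eb : nat -> nat -> Vec) (lbx : nat -> nat -> R) (ew : nat -> nat -> Vec) (lw : nat -> nat -> R).
Hypothesis HWs : forall z, z < d -> spectral n (W z) (ea z) (la z).
Hypothesis Hrs : spectral n (rhoB d n W) fb lb.
Hypothesis HWds : forall x, x < d -> spectral (d * nD) (dual_channel d n nD phi x) (eb x) (lbx x).
Hypothesis Homs : forall z, z < d -> spectral nD (om n nD phi z) (ew z) (lw z).

Definition Rz z := mfun n (fun t => ln (t * / INR d)) (ea z) (la z).
Definition Qm := mfun n (fun t => (ln t - ln (INR d))%R) fb lb.
Definition Gx x := mfun (d * nD) (fun t => ln (t * / INR d)) (eb x) (lbx x).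
Definition RBp := mfun (d * nD) ln (ublk nD ew) (lblk nD (fun z k => (lw z k * / INR d)%R)).

Lemma psi_lem x : x < d -> forall j b, j < d * nD -> b < n ->
  sumC (d * nD) (fun i => Cmul (msub (Gx x) RBp j i) (Th d n nD phi x i b)) =
  sumC n (fun b' => Cmul (msub Qm (Rz (j / nD)) b b') (Th d n nD phi x j b')).
Proof.
  intros Hx j b Hj Hb.
  assert (HdR : (0 < INR d)%R) by (apply lt_0_INR; lia).
  unfold msub.
  rewrite (sumC_ext _ _ (fun i => Csub (Cmul (Gx x j i) (Th d n nD phi x i b)) (Cmul (RBp j i) (Th d n nD phi x i b)))).
  2:{ intros. unfold Csub. ring. }
  rewrite (sumC_ext n _ (fun b' => Csub (Cmul (Qm b b') (Th d n nD phi x j b')) (Cmul (Rz (j / nD) b b') (Th d n nD phi x j b')))).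
  2:{ intros. unfold Csub. ring. }
  rewrite !sumC_sub. f_equal.
  - unfold Gx, Qm.
    assert (Hg : forall t, (0 < t)%R -> (ln t - ln (INR d))%R = ln (t * / INR d)).
    { intros t Ht. rewrite ln_mult, ln_Rinv; auto. apply Rinv_0_lt_compat; auto. }
    exact (TT (d * nD) n (Th d n nD phi x) (dual_channel d n nD phi x) (rhoB d n W) (eb x) (lbx x) fb lb _ _
      (fun i i' _ _ => Wd_gram d n nD phi x i i')
      (fun b0 b' Hb0 Hb' => rhoB_gram d n nD phi W hd hnD hphi x b0 b' hn Hb0 Hb')
      (HWds x Hx) Hrs Hg j b Hj Hb).
  - destruct (divmod_lt j nD d Hj) as [Hj1 Hj2].
    rewrite (sumC_ext _ _ (fun i => Cmul (blk nD (fun z => mfun nD (fun t => ln (t * / INR d)) (ew z) (lw z)) j i)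
                                       (Th d n nD phi x i b))).
    2:{ intros i Hi. unfold RBp. rewrite mfun_blk; auto. }
    rewrite sumC_prod.
    rewrite (sumC_ext d _ (fun z => if Nat.eqb (j / nD) z then
        sumC nD (fun e => Cmul (cf d x z) (Cmul (mfun nD (fun t => ln (t * / INR d)) (ew z) (lw z) (j mod nD) e)
                      (phi z (b * nD + e)))) else C0)).
    2:{ intros z Hz. destruct (Nat.eqb_spec (j / nD) z) as [Ez|Ez].
        - apply sumC_ext. intros e He. unfold blk. destruct (divmod_eq z e nD He) as [E1 E2].
          rewrite E1, E2. subst z. rewrite Nat.eqb_refl. rewrite Th_val'; auto. ring.
        - apply sumC_zero. intros e He. unfold blk. destruct (divmod_eq z e nD He) as [E1 E2].
          rewrite E1. destruct (Nat.eqb_spec (j / nD) z); [congruence|]. ring. }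
    rewrite sumC_delta'. destruct (Nat.ltb_spec (j / nD) d); [|lia].
    rewrite sumC_scal_l.
    rewrite (TT nD n (fun e b => phi (j / nD) (b * nD + e)) (om n nD phi (j / nD)) (W (j / nD))
               (ew (j / nD)) (lw (j / nD)) (ea (j / nD)) (la (j / nD)) _ _
               (fun e1 e2 _ _ => om_gram n nD phi (j / nD) e1 e2)
               (fun b0 b' Hb0 Hb' => W_gram d n nD phi W hphi (j / nD) b0 b' Hj1 Hb0 Hb')
               (Homs _ Hj1) (HWs _ Hj1) (fun t _ => eq_refl) (j mod nD) b Hj2 Hb).
    rewrite <- sumC_scal_l. apply sumC_ext. intros b' Hb'. unfold Rz.
    rewrite (Th_val d n nD phi hd hnD x j b'); auto. ring.
Qed.
End Main.

Open Scope R_scope.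

Lemma msub_herm (A0 B0 : Mat) i j : Cconj (A0 j i) = A0 i j -> Cconj (B0 j i) = B0 i j ->
  Cconj (msub A0 B0 j i) = msub A0 B0 i j.
Proof. intros H1 H2. unfold msub. rewrite <- H1, <- H2. destruct (A0 j i), (B0 j i). Ceq. Qed.

Lemma re_scal r z : re (Cmul (RtoC r) z) = r * re z.
Proof. simpl. ring. Qed.

Theorem corollary5 (d n : nat) (W : nat -> Mat) (hd : (0 < d)%nat)
  (hW : cq_channel d n W) (hsym : symmetric_channel d n W)
  (nD : nat) (phi : nat -> Vec)
  (hphi : forall z, (z < d)%nat -> purifies n nD (phi z) (W z)) :
  V_channel d n W = V_channel d (d * nD) (dual_channel d n nD phi).
Proof.
  clear hsym.
  assert (HdR : 0 < INR d) by (apply lt_0_INR; lia).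
  assert (Htr : forall z, (z < d)%nat -> mtrace n (W z) = C1).
  { intros z Hz. destruct (hW z Hz) as [_ [_ H]]. exact H. }
  assert (hn : n <> 0%nat).
  { intro H0. assert (H := Htr 0%nat hd). subst n. unfold mtrace in H. rewrite sumC_0 in H.
    apply (f_equal re) in H. simpl in H. lra. }
  assert (hnD : nD <> 0%nat).
  { intro H0. assert (H := Htr 0%nat hd). subst nD.
    assert (Hz : mtrace n (W 0%nat) = C0).
    { unfold mtrace. apply sumC_zero. intros i Hi. rewrite <- (hphi 0%nat hd i i Hi Hi). reflexivity. }
    rewrite Hz in H. apply (f_equal re) in H. simpl in H. lra. }
  destruct (choose_dec n d W (fun z Hz => proj1 (hW z Hz))) as [ea [la HWs]].
  assert (Hrh : hermitian n (rhoB d n W)).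
  { apply (gram_herm n (d * nD) (fun b i => Th d n nD phi 0 i b)). intros. apply rhoB_gram; auto. }
  destruct (Tr.SE n _ Hrh) as [fb [lb Hrs]].
  destruct (choose_dec (d * nD) d (dual_channel d n nD phi)
     (fun x _ => gram_herm (d * nD) n (Th d n nD phi x) _ (fun i j _ _ => Wd_gram d n nD phi x i j)))
     as [eb [lbx HWds]].
  destruct (choose_dec nD d (om n nD phi)
     (fun z _ => gram_herm nD n (fun e b => phi z (b * nD + e)%nat) _ (fun i j _ _ => om_gram n nD phi z i j)))
     as [ew [lw Homs]].
  pose proof (BL d n W ea la fb lb hn HWs Hrs) as HL. cbv zeta in HL. destruct HL as [L1 L2].
  assert (Hsig : spectral (d * nD) (ptrace1 d (d * nD) (cq_state d (d * nD) (dual_channel d n nD phi)))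
     (ublk nD ew) (lblk nD (fun z k => lw z k * / INR d))).
  { apply spectral_meq with (blk nD (fun z => mscale (RtoC (/ INR d)) (om n nD phi z))).
    - apply BD; auto. intros. apply spectral_scale; auto.
    - apply meq_sym. apply sigmaCD_blk; auto. }
  pose proof (BL d (d * nD) (dual_channel d n nD phi) eb lbx _ _ ltac:(lia) HWds Hsig) as HR.
  cbv zeta in HR. destruct HR as [R1 R2].
  unfold V_channel, dispersion, relD. cbv zeta.
  rewrite L1, L2, R1, R2. clear L1 L2 R1 R2.
  set (RB := mfun n ln fb lb).
  set (a := fun z => mtrace n (mmul n (W z) (msub (Rz d n ea la z) RB))).
  set (b := fun z => mtrace n (mmul n (W z) (mmul n (msub (Rz d n ea la z) RB) (msub (Rz d n ea la z) RB)))).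
  set (L := ln (INR d)).
  assert (HM : forall z, (z < d)%nat -> meq n (msub (Qm d n fb lb) (Rz d n ea la z))
     (fun k i => Csub (Copp (msub (Rz d n ea la z) RB k i)) (Cmul (RtoC L) (idm k i)))).
  { intros z Hz k i Hk Hi. unfold msub at 1. unfold Qm. rewrite (Q_expand n _ fb lb (INR d) Hrs); auto.
    unfold msub, Csub, RB, L. ring. }
  assert (HX1 : forall x, (x < d)%nat ->
     mtrace (d * nD) (mmul (d * nD) (dual_channel d n nD phi x) (msub (Gx d nD eb lbx x) (RBp d nD ew lw))) =
     Cmul (RtoC (/ INR d)) (sumC d (fun z => Cadd (Cmul (RtoC (-1)) (a z)) (Cmul (RtoC (- L)) C1)))).
  { intros x Hx.
    change (dual_channel d n nD phi x) with (fun i j => sumC n (fun b => Cmul (Th d n nD phi x i b) (Cconj (Th d n nD phi x j b)))).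
    rewrite (PX1 d n nD (Th d n nD phi x) _ (fun z => msub (Qm d n fb lb) (Rz d n ea la z)) (cf d x) phi W).
    - f_equal. apply sumC_ext. intros z Hz. rewrite (proj1 (ALG n (W z) _ _ L (HM z Hz))), Htr; auto.
    - intros. apply Th_val'; auto.
    - intros. apply cf_norm; auto.
    - intros. apply (W_gram d n nD phi W hphi); auto.
    - apply (psi_lem d n nD phi W hd hn hnD hphi ea la fb lb eb lbx ew lw HWs Hrs HWds Homs x Hx). }
  assert (HX2 : forall x, (x < d)%nat ->
     mtrace (d * nD) (mmul (d * nD) (dual_channel d n nD phi x)
        (mmul (d * nD) (msub (Gx d nD eb lbx x) (RBp d nD ew lw)) (msub (Gx d nD eb lbx x) (RBp d nD ew lw)))) =
     Cmul (RtoC (/ INR d)) (sumC d (fun z => Cadd (Cadd (b z) (Cmul (RtoC (2 * L)) (a z))) (Cmul (RtoC (L * L)) C1)))).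
  { intros x Hx.
    change (dual_channel d n nD phi x) with (fun i j => sumC n (fun b => Cmul (Th d n nD phi x i b) (Cconj (Th d n nD phi x j b)))).
    rewrite (PX2 d n nD (Th d n nD phi x) _ (fun z => msub (Qm d n fb lb) (Rz d n ea la z)) (cf d x) phi W).
    - f_equal. apply sumC_ext. intros z Hz. rewrite (proj2 (ALG n (W z) _ _ L (HM z Hz))), Htr; auto.
    - auto.
    - intros. apply Th_val'; auto.
    - intros. apply cf_norm; auto.
    - intros. apply (W_gram d n nD phi W hphi); auto.
    - apply (psi_lem d n nD phi W hd hn hnD hphi ea la fb lb eb lbx ew lw HWs Hrs HWds Homs x Hx).
    - intros. apply msub_herm; apply mfun_herm.
    - intros. apply msub_herm; apply mfun_herm. }
  unfold Gx, RBp in HX1, HX2.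
  rewrite (sumC_ext d _ _ HX1), (sumC_ext d _ _ HX2).
  rewrite !sumC_const_R.
  rewrite (sumC_add d (fun z => Cmul (RtoC (-1)) (a z))), (sumC_add d (fun z => Cadd (b z) _)),
     (sumC_add d b), !sumC_scal_l, !sumC_const_R.
  transitivity (re (Cmul (RtoC (/ INR d)) (sumC d b)) - (re (Cmul (RtoC (/ INR d)) (sumC d a))) ^ 2);
    [reflexivity|].
  rewrite !re_scal, !re_add, !re_scal.
  set (SA := re (sumC d a)). set (SB := re (sumC d b)). simpl re.
  field. lra.
Qed.
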